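(* The relation $\equiv_1$ of $1$-equivalence on $2^\mathbb{N}$ is $\Pi^0_2$-graphable with diameter $2$.
   Context: Subsets of $\mathbb{N}$ are identified with elements of $2^\mathbb{N}$. $A\equiv_1 B$ means there is a computable bijection $f:\mathbb{N}\to\mathbb{N}$ with $n\in A\iff f(n)\in B$ for all $n$. An equivalence relation $E$ on a space $X$ is $\Gamma$-graphable (for a pointclass $\Gamma$, here lightface $\Pi^0_2$) if there is a simple undirected graph $G\subseteq X\times X$ in $\Gamma$ whose connectedness relation (connected by a finite path) equals $E$; it is $\Gamma$-graphable with diameter $k$ if such a $G$ exists in which $k$ is the least integer such that any two $G$-connected points are joined by a path of length at most $k$. *)

(* Defs.v *)
From Stdlib Require Import List Arith Relations.
Import ListNotations.

Inductive prf : Type :=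
| PZero : prf
| PSucc : prf
| PProj : nat -> prf               (* i-th argument (0 if absent) *)
| PComp : prf -> list prf -> prf
| PPrec : prf -> prf -> prf
| PMin  : prf -> prf.

Inductive eval : prf -> list nat -> nat -> Prop :=
| e_zero xs : eval PZero xs 0
| e_succ xs : eval PSucc xs (S (hd 0 xs))
| e_proj i xs : eval (PProj i) xs (nth i xs 0)
| e_comp f gs xs ys y : evals gs xs ys -> eval f ys y -> eval (PComp f gs) xs y
| e_prec0 f g xs y : eval f xs y -> eval (PPrec f g) (0 :: xs) y
| e_precS f g n xs r y :
    eval (PPrec f g) (n :: xs) r -> eval g (n :: r :: xs) y ->
    eval (PPrec f g) (S n :: xs) y
| e_min f xs y :
    eval f (y :: xs) 0 ->
    (forall z, z < y -> exists v, v <> 0 /\ eval f (z :: xs) v) ->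
    eval (PMin f) xs y
with evals : list prf -> list nat -> list nat -> Prop :=
| es_nil xs : evals [] xs []
| es_cons g gs xs y ys : eval g xs y -> evals gs xs ys -> evals (g :: gs) xs (y :: ys).

Definition computable (f : nat -> nat) : Prop :=
  exists c : prf, forall n, eval c [n] (f n).

Definition computable_rel3 (P : nat -> nat -> nat -> Prop) : Prop :=
  exists c : prf, forall a b d, exists v, eval c [a; b; d] v /\ (P a b d <-> v = 0).

Definition cantor := nat -> bool.

(** Code of the initial segment X|m (binary with a leading 1). *)
Fixpoint prefix_code (X : cantor) (m : nat) : nat :=
  match m with
  | 0 => 1
  | S m' => 2 * prefix_code X m' + (if X m' then 1 else 0)
  end.

Definition Pi02_rel (R : cantor -> cantor -> Prop) : Prop :=
  exists P, computable_rel3 P /\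
    forall X Y, R X Y <-> forall n, exists m, P n (prefix_code X m) (prefix_code Y m).

Definition one_equiv (A B : cantor) : Prop :=
  exists f : nat -> nat, computable f /\
    (exists g : nat -> nat, (forall n, g (f n) = n) /\ (forall n, f (g n) = n)) /\
    (forall n, A n = B (f n)).

Definition simple_graph {T} (G : T -> T -> Prop) : Prop :=
  (forall x y, G x y -> G y x) /\ (forall x, ~ G x x).

Definition connected {T} (G : T -> T -> Prop) : T -> T -> Prop :=
  clos_refl_trans T G.

Fixpoint path_le {T} (G : T -> T -> Prop) (k : nat) (x y : T) : Prop :=
  match k with
  | 0 => x = y
  | S k' => path_le G k' x y \/ exists z, path_le G k' x z /\ G z y
  end.

Definition has_diameter {T} (G : T -> T -> Prop) (k : nat) : Prop :=
  (forall x y, connected G x y -> path_le G k x y) /\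
  (forall j, (forall x y, connected G x y -> path_le G j x y) -> k <= j).

Definition Pi02_graphable_diam (E : cantor -> cantor -> Prop) (k : nat) : Prop :=
  exists G : cantor -> cantor -> Prop,
    Pi02_rel G /\ simple_graph G /\
    (forall X Y, connected G X Y <-> E X Y) /\
    has_diameter G k.

(* Main.v *)
Require Import Defs.
From Stdlib Require Import List Arith Lia Bool Cantor IndefiniteDescription Classical FunctionalExtensionality Relations.
Import ListNotations.

Definition comput (k : nat) (F : list nat -> nat) : Prop :=
  exists c, forall xs, length xs = k -> eval c xs (F xs).

Lemma comput_ext k F G : (forall xs, length xs = k -> F xs = G xs) -> comput k F -> comput k G.
Proof. intros H [c Hc]. exists c. intros xs Hl. rewrite <- H by auto. auto. Qed.

Lemma c_proj k i : comput k (fun xs => nth i xs 0).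
Proof. exists (PProj i). intros. constructor. Qed.

Lemma c_hd k : comput k (fun xs => hd 0 xs).
Proof. exists (PProj 0). intros xs _. destruct xs; constructor. Qed.

Lemma c_nth_tl k i : comput k (fun xs => nth (S i) xs 0) -> comput k (fun xs => nth i (tl xs) 0).
Proof. apply comput_ext. intros [|x xs] _; simpl; auto. destruct i; auto. Qed.

Lemma c_hd_tl k : comput k (fun xs => nth 1 xs 0) -> comput k (fun xs => hd 0 (tl xs)).
Proof. apply comput_ext. intros [|x [|y xs]] _; simpl; auto. Qed.

Lemma c_succ k A : comput k A -> comput k (fun xs => S (A xs)).
Proof. intros [c Hc]. exists (PComp PSucc [c]). intros xs Hl.
  econstructor. constructor. apply Hc; auto. constructor. constructor. Qed.

Lemma c_zero k : comput k (fun _ => 0).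
Proof. exists PZero. intros; constructor. Qed.

Lemma c_const k n : comput k (fun _ => n).
Proof. induction n. apply c_zero. apply (c_succ _ _ IHn). Qed.

Lemma evals_map k (As : list (list nat -> nat)) :
  Forall (comput k) As -> exists cs, forall xs, length xs = k -> evals cs xs (map (fun A => A xs) As).
Proof.
  induction 1 as [|A As [c Hc] _ [cs Hcs]].
  - exists []. intros; constructor.
  - exists (c :: cs). intros. simpl. constructor; auto.
Qed.

Lemma c_comp k m F (As : list (list nat -> nat)) :
  comput m F -> length As = m -> Forall (comput k) As ->
  comput k (fun xs => F (map (fun A => A xs) As)).
Proof.
  intros [f Hf] Hl HA. destruct (evals_map _ _ HA) as [cs Hcs].
  exists (PComp f cs). intros xs Hxs. econstructor. apply Hcs; auto.
  apply Hf. rewrite length_map; auto.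
Qed.

Lemma evals_proj_gen l zs : evals (map PProj l) zs (map (fun i => nth i zs 0) l).
Proof. induction l; simpl; constructor; auto. constructor. Qed.

Lemma map_nth_seq xs : map (fun i => nth i xs 0) (seq 0 (length xs)) = xs.
Proof.
  induction xs; simpl; auto. f_equal. rewrite <- seq_shift, map_map. simpl. auto.
Qed.

Lemma evals_projs k xs : length xs = k -> evals (map PProj (seq 0 k)) xs xs.
Proof.
  intros <-. rewrite <- (map_nth_seq xs) at 3. apply evals_proj_gen.
Qed.

Lemma c_rec k B St N :
  comput k B -> comput (S (S k)) St -> comput k N ->
  comput k (fun xs => nat_rect (fun _ => nat) (B xs) (fun i r => St (i :: r :: xs)) (N xs)).
Proof.
  intros [b Hb] [s Hs] [n Hn]. exists (PComp (PPrec b s) (n :: map PProj (seq 0 k))).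
  intros xs Hl. econstructor. constructor. apply Hn; auto. apply evals_projs; auto.
  generalize (N xs). induction n0; simpl.
  - constructor. apply Hb; auto.
  - econstructor. apply IHn0. apply Hs. simpl. lia.
Qed.

Definition b2n (b : bool) : nat := if b then 1 else 0.
Definition cb k (B : list nat -> bool) := comput k (fun xs => b2n (B xs)).

Lemma lift1 F k A : comput 1 (fun v => F (nth 0 v 0)) -> comput k A -> comput k (fun xs => F (A xs)).
Proof. intros HF HA. eapply comput_ext; [|apply (c_comp k 1 _ [A] HF eq_refl)]. reflexivity. auto. Qed.
Lemma lift2 F k A B : comput 2 (fun v => F (nth 0 v 0) (nth 1 v 0)) -> comput k A -> comput k B -> comput k (fun xs => F (A xs) (B xs)).
Proof. intros HF HA HB. eapply comput_ext; [|apply (c_comp k 2 _ [A;B] HF eq_refl)]. reflexivity. auto. Qed.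
Lemma lift3 F k A B C : comput 3 (fun v => F (nth 0 v 0) (nth 1 v 0) (nth 2 v 0)) -> comput k A -> comput k B -> comput k C -> comput k (fun xs => F (A xs) (B xs) (C xs)).
Proof. intros HF HA HB HC. eapply comput_ext; [|apply (c_comp k 3 _ [A;B;C] HF eq_refl)]. reflexivity. auto. Qed.
Lemma lift4 F k A B C D : comput 4 (fun v => F (nth 0 v 0) (nth 1 v 0) (nth 2 v 0) (nth 3 v 0)) -> comput k A -> comput k B -> comput k C -> comput k D -> comput k (fun xs => F (A xs) (B xs) (C xs) (D xs)).
Proof. intros HF HA HB HC HD. eapply comput_ext; [|apply (c_comp k 4 _ [A;B;C;D] HF eq_refl)]. reflexivity. auto. Qed.

Lemma c_iter k F N A : comput 1 (fun v => F (nth 0 v 0)) -> comput k N -> comput k A ->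
  comput k (fun xs => Nat.iter (N xs) F (A xs)).
Proof.
  intros HF HN HA.
  eapply comput_ext; [|apply (c_rec k A (fun ys => F (nth 1 ys 0)) N HA)].
  - intros xs _. simpl. induction (N xs); simpl; congruence.
  - apply (lift1 F). auto. apply c_proj.
  - auto.
Qed.

Lemma c_add k A B : comput k A -> comput k B -> comput k (fun xs => A xs + B xs).
Proof.
  apply lift2. eapply comput_ext; [|apply (c_rec 2 (fun v => nth 1 v 0) (fun ys => S (nth 1 ys 0)) (fun v => nth 0 v 0))].
  - intros xs _. simpl. induction (nth 0 xs 0); simpl; auto.
  - apply c_proj.
  - apply c_succ, c_proj.
  - apply c_proj.
Qed.

Lemma c_mul k A B : comput k A -> comput k B -> comput k (fun xs => A xs * B xs).
Proof.
  apply lift2. eapply comput_ext; [|apply (c_rec 2 (fun v => 0) (fun ys => nth 3 ys 0 + nth 1 ys 0) (fun v => nth 0 v 0))].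
  - intros xs _. simpl. induction (nth 0 xs 0); simpl; auto.
  - apply c_zero.
  - apply c_add; apply c_proj.
  - apply c_proj.
Qed.

Lemma c_pred k A : comput k A -> comput k (fun xs => pred (A xs)).
Proof.
  apply lift1. eapply comput_ext; [|apply (c_rec 1 (fun v => 0) (fun ys => nth 0 ys 0) (fun v => nth 0 v 0))].
  - intros xs _. simpl. destruct (nth 0 xs 0); simpl; auto.
  - apply c_zero. - apply c_proj. - apply c_proj.
Qed.

Lemma iter_pred n a : Nat.iter n pred a = a - n.
Proof. induction n; simpl. lia. rewrite IHn. lia. Qed.

Lemma c_sub k A B : comput k A -> comput k B -> comput k (fun xs => A xs - B xs).
Proof.
  intros HA HB. eapply comput_ext; [|apply (c_iter k pred B A)].
  - intros xs _. apply iter_pred.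
  - apply c_pred, c_proj.
  - auto.
  - auto.
Qed.

Lemma c_tl k F : comput k F -> comput (S k) (fun ys => F (tl ys)).
Proof.
  intros [c Hc]. exists (PComp c (map PProj (seq 1 k))). intros ys Hl.
  destruct ys as [|y xs]; [discriminate|]. simpl in Hl. injection Hl as Hl.
  econstructor; [apply evals_proj_gen|]. 
  rewrite <- seq_shift, map_map. simpl. subst k. rewrite map_nth_seq. apply Hc; auto.
Qed.

Lemma c_ifz k A X Y : comput k A -> comput k X -> comput k Y ->
  comput k (fun xs => match A xs with 0 => X xs | S _ => Y xs end).
Proof.
  intros HA HX HY. eapply comput_ext; [|apply (c_rec k X (fun ys => Y (tl (tl ys))) A HX)].
  - intros xs Hl. cbv beta. destruct (A xs); reflexivity.
  - apply (c_tl (S k) (fun zs => Y (tl zs))). apply c_tl. auto.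
  - auto.
Qed.

Lemma c_nth_gen k i G : comput k (fun xs => nth (S i) (G xs) 0) -> comput k (fun xs => nth i (tl (G xs)) 0).
Proof. apply comput_ext. intros xs _. destruct (G xs); simpl; auto. destruct i; auto. Qed.
Lemma c_hd_gen k G : comput k (fun xs => nth 0 (G xs) 0) -> comput k (fun xs => hd 0 (G xs)).
Proof. apply comput_ext. intros xs _. destruct (G xs); simpl; auto. Qed.

Lemma c_if k B X Y : comput k (fun xs => b2n (B xs)) -> comput k X -> comput k Y ->
  comput k (fun xs => if B xs then X xs else Y xs).
Proof.
  intros HB HX HY. eapply comput_ext; [|apply (c_ifz k (fun xs => 1 - b2n (B xs)) X Y)].
  - intros xs _. cbv beta. destruct (B xs); reflexivity.
  - apply c_sub; auto. apply c_const.
  - auto. - auto.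
Qed.

Lemma c_eqb k A B : comput k A -> comput k B -> comput k (fun xs => b2n (A xs =? B xs)).
Proof.
  intros HA HB. eapply comput_ext; [|apply (c_sub k (fun _ => 1) (fun xs => (A xs - B xs) + (B xs - A xs)))].
  - intros xs _. cbv beta. destruct (Nat.eqb_spec (A xs) (B xs)); cbn [b2n]; lia.
  - apply c_const.
  - apply c_add; apply c_sub; auto.
Qed.

Lemma c_leb k A B : comput k A -> comput k B -> comput k (fun xs => b2n (A xs <=? B xs)).
Proof.
  intros HA HB. eapply comput_ext; [|apply (c_sub k (fun _ => 1) (fun xs => (A xs - B xs)))].
  - intros xs _. cbv beta. destruct (Nat.leb_spec (A xs) (B xs)); cbn [b2n]; lia.
  - apply c_const.
  - apply c_sub; auto.
Qed.

Lemma c_ltb k A B : comput k A -> comput k B -> comput k (fun xs => b2n (A xs <? B xs)).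
Proof.
  intros HA HB. eapply comput_ext; [|apply (c_leb k (fun xs => S (A xs)) B)].
  - intros xs _. reflexivity.
  - apply c_succ; auto. - auto.
Qed.

Lemma c_andb k A B : comput k (fun xs => b2n (A xs)) -> comput k (fun xs => b2n (B xs)) -> comput k (fun xs => b2n (A xs && B xs)).
Proof.
  intros HA HB. eapply comput_ext; [|apply (c_mul k _ _ HA HB)].
  intros xs _. cbv beta. destruct (A xs), (B xs); reflexivity.
Qed.

Lemma c_orb k A B : comput k (fun xs => b2n (A xs)) -> comput k (fun xs => b2n (B xs)) -> comput k (fun xs => b2n (A xs || B xs)).
Proof.
  intros HA HB. eapply comput_ext; [|apply (c_sub k _ _ (c_add k _ _ HA HB) (c_mul k _ _ HA HB))].
  intros xs _. cbv beta. destruct (A xs), (B xs); reflexivity.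
Qed.

Lemma c_negb k A : comput k (fun xs => b2n (A xs)) -> comput k (fun xs => b2n (negb (A xs))).
Proof.
  intros HA. eapply comput_ext; [|apply (c_sub k _ _ (c_const k 1) HA)].
  intros xs _. cbv beta. destruct (A xs); reflexivity.
Qed.

Lemma c_bconst k b : comput k (fun _ => b2n b).
Proof. apply c_const. Qed.

Fixpoint bex (n : nat) (p : nat -> bool) : bool :=
  match n with 0 => false | S n => bex n p || p n end.
Fixpoint ball (n : nat) (p : nat -> bool) : bool :=
  match n with 0 => true | S n => ball n p && p n end.
Fixpoint bmin (n : nat) (p : nat -> bool) : nat :=
  match n with 0 => 0 | S n => let m := bmin n p in if m <? n then m else if p n then n else S n end.

Lemma bex_spec n p : bex n p = true <-> exists i, i < n /\ p i = true.
Proof.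
  induction n; simpl. split. discriminate. intros [i [H _]]; lia.
  rewrite Bool.orb_true_iff, IHn. split.
  - intros [[i [H1 H2]]|H]. exists i; split; auto. exists n; auto.
  - intros [i [H1 H2]]. destruct (Nat.eq_dec i n). subst; auto. left; exists i; split; auto; lia.
Qed.

Lemma ball_spec n p : ball n p = true <-> forall i, i < n -> p i = true.
Proof.
  induction n; simpl. split; auto. intros; lia.
  rewrite Bool.andb_true_iff, IHn. split.
  - intros [H1 H2] i Hi. destruct (Nat.eq_dec i n). subst; auto. apply H1; lia.
  - intros H; split; auto.
Qed.

Lemma bmin_spec n p i : i < n -> p i = true -> (forall j, j < i -> p j = false) -> bmin n p = i.
Proof.
  induction n; intros Hi Hp Hj. lia. simpl.
  destruct (Nat.eq_dec i n).
  - subst. assert (bmin n p = n).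
    { clear Hi. assert (forall m, m <= n -> bmin m p = m). induction m; simpl; auto. intros.
      rewrite IHm by lia. rewrite Nat.ltb_irrefl. rewrite Hj by lia. auto. auto. }
    rewrite H, Nat.ltb_irrefl, Hp. auto.
  - rewrite IHn by (auto; lia). destruct (Nat.ltb_spec i n); auto; lia.
Qed.

Lemma c_drop1 k (F : nat -> list nat -> nat) : comput (S k) (fun ys => F (hd 0 ys) (tl ys)) ->
  comput (S (S k)) (fun ys => F (hd 0 ys) (tl (tl ys))).
Proof.
  intros [c Hc]. exists (PComp c (PProj 0 :: map PProj (seq 2 k))). intros ys Hl.
  destruct ys as [|y [|z xs]]; try discriminate. simpl in Hl. injection Hl as Hl.
  econstructor; [apply (evals_proj_gen (0 :: seq 2 k))|].
  simpl. rewrite <- !seq_shift, !map_map. simpl. subst k. rewrite map_nth_seq. apply (Hc (y :: xs)); simpl; auto.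
Qed.

Lemma c_bex k (P : nat -> list nat -> bool) N :
  comput (S k) (fun ys => b2n (P (hd 0 ys) (tl ys))) -> comput k N ->
  comput k (fun xs => b2n (bex (N xs) (fun i => P i xs))).
Proof.
  intros HP HN. pose proof (c_drop1 k (fun i xs => b2n (P i xs)) HP) as HP2. simpl in HP2.
  eapply comput_ext; [|apply (c_rec k (fun _ => 0) (fun ys => b2n (negb (nth 1 ys 0 =? 0) || P (hd 0 ys) (tl (tl ys)))) N)].
  - intros xs _. simpl. induction (N xs); simpl; auto. rewrite IHn. destruct (bex n _); reflexivity.
  - apply c_const.
  - apply c_orb; auto. apply c_negb. apply c_eqb. apply c_proj. apply c_const.
  - auto.
Qed.

Lemma c_ball k (P : nat -> list nat -> bool) N :
  comput (S k) (fun ys => b2n (P (hd 0 ys) (tl ys))) -> comput k N ->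
  comput k (fun xs => b2n (ball (N xs) (fun i => P i xs))).
Proof.
  intros HP HN. pose proof (c_drop1 k (fun i xs => b2n (P i xs)) HP) as HP2. simpl in HP2.
  eapply comput_ext; [|apply (c_rec k (fun _ => 1) (fun ys => b2n (negb (nth 1 ys 0 =? 0) && P (hd 0 ys) (tl (tl ys)))) N)].
  - intros xs _. simpl. induction (N xs); simpl; auto. rewrite IHn. destruct (ball n _); reflexivity.
  - apply c_const.
  - apply c_andb; auto. apply c_negb. apply c_eqb. apply c_proj. apply c_const.
  - auto.
Qed.

Lemma c_bmin k (P : nat -> list nat -> bool) N :
  comput (S k) (fun ys => b2n (P (hd 0 ys) (tl ys))) -> comput k N ->
  comput k (fun xs => bmin (N xs) (fun i => P i xs)).
Proof.
  intros HP HN. pose proof (c_drop1 k (fun i xs => b2n (P i xs)) HP) as HP2. simpl in HP2.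
  eapply comput_ext; [|apply (c_rec k (fun _ => 0) (fun ys => if nth 1 ys 0 <? hd 0 ys then nth 1 ys 0 else if P (hd 0 ys) (tl (tl ys)) then hd 0 ys else S (hd 0 ys)) N)].
  - intros xs _. simpl. induction (N xs); simpl; auto. rewrite IHn. reflexivity.
  - apply c_const.
  - apply c_if. apply c_ltb. apply c_proj. apply c_hd. apply c_proj.
    apply c_if. auto. apply c_hd. apply c_succ, c_hd.
  - auto.
Qed.

Lemma c_bif k B X Y : comput k (fun xs => b2n (B xs)) -> comput k (fun xs => b2n (X xs)) -> comput k (fun xs => b2n (Y xs)) ->
  comput k (fun xs => b2n (if B xs then X xs else Y xs)).
Proof.
  intros HB HX HY. eapply comput_ext; [|apply (c_if k B _ _ HB HX HY)].
  intros xs _. cbv beta. destruct (B xs); reflexivity.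
Qed.

Ltac cpt_user := fail.
Ltac cpt_step :=
  first [ apply c_const
        | apply c_proj
        | apply c_hd_gen
        | apply c_nth_gen
        | cpt_user
        | apply c_succ
        | apply c_bex
        | apply c_ball
        | apply c_bmin
        | apply c_iter
        | lazymatch goal with |- comput _ (fun _ => b2n _) => fail | _ => apply c_if end
        | apply c_bif
        | apply c_eqb
        | apply c_leb
        | apply c_ltb
        | apply c_andb
        | apply c_orb
        | apply c_negb
        | apply c_add
        | apply c_mul
        | apply c_sub
        | apply c_pred
        | progress cbv beta zeta ].
Ltac cpt := repeat cpt_step.

Definition cp (x y : nat) : nat := Cantor.to_nat (x, y).
Definition pi1 (n : nat) : nat := fst (Cantor.of_nat n).
Definition pi2 (n : nat) : nat := snd (Cantor.of_nat n).

Lemma pi1_cp x y : pi1 (cp x y) = x.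
Proof. unfold pi1, cp. rewrite Cantor.cancel_of_to. reflexivity. Qed.
Lemma pi2_cp x y : pi2 (cp x y) = y.
Proof. unfold pi2, cp. rewrite Cantor.cancel_of_to. reflexivity. Qed.
Lemma cp_pi n : cp (pi1 n) (pi2 n) = n.
Proof. unfold pi1, pi2, cp. rewrite <- surjective_pairing. apply Cantor.cancel_to_of. Qed.
Lemma cp_inj x y x' y' : cp x y = cp x' y' -> x = x' /\ y = y'.
Proof. intros H. split; [rewrite <- (pi1_cp x y), <- (pi1_cp x' y') | rewrite <- (pi2_cp x y), <- (pi2_cp x' y')]; congruence. Qed.
Lemma cp_ge x y : x + y <= cp x y.
Proof. unfold cp. pose proof (Cantor.to_nat_non_decreasing x y). lia. Qed.
Lemma pi1_le n : pi1 n <= n.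
Proof. rewrite <- (cp_pi n) at 2. pose proof (cp_ge (pi1 n) (pi2 n)). lia. Qed.
Lemma pi2_le n : pi2 n <= n.
Proof. rewrite <- (cp_pi n) at 2. pose proof (cp_ge (pi1 n) (pi2 n)). lia. Qed.
Lemma pi2_lt n : 0 < pi1 n -> pi2 n < n.
Proof. intros H. rewrite <- (cp_pi n) at 2. pose proof (cp_ge (pi1 n) (pi2 n)). lia. Qed.
Lemma cp00 : cp 0 0 = 0.
Proof. reflexivity. Qed.

Lemma c_cp2 : comput 2 (fun v => cp (nth 0 v 0) (nth 1 v 0)).
Proof.
  eapply comput_ext; [|apply (c_add 2 (fun v => nth 1 v 0) (fun v => nat_rect (fun _ => nat) 0 (fun i r => S i + r) (nth 1 v 0 + nth 0 v 0)))].
  - intros; reflexivity.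
  - apply c_proj.
  - apply (c_rec 2 (fun _ => 0) (fun ys => S (hd 0 ys) + nth 1 ys 0)); cpt.
Qed.
Lemma c_cp k A B : comput k A -> comput k B -> comput k (fun xs => cp (A xs) (B xs)).
Proof. apply lift2, c_cp2. Qed.

Lemma pi1_bmin n : pi1 n = bmin (S n) (fun x => bex (S n) (fun y => cp x y =? n)).
Proof.
  symmetry. apply bmin_spec.
  - pose proof (pi1_le n); lia.
  - apply bex_spec. exists (pi2 n). split. pose proof (pi2_le n); lia. rewrite cp_pi. apply Nat.eqb_refl.
  - intros j Hj. apply not_true_iff_false. rewrite bex_spec. intros [y [_ Hy]]. apply Nat.eqb_eq in Hy.
    rewrite <- Hy, pi1_cp in Hj. lia.
Qed.
Lemma pi2_bmin n : pi2 n = bmin (S n) (fun y => cp (pi1 n) y =? n).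
Proof.
  symmetry. apply bmin_spec.
  - pose proof (pi2_le n); lia.
  - rewrite cp_pi. apply Nat.eqb_refl.
  - intros j Hj. apply not_true_iff_false. intros Hy. apply Nat.eqb_eq in Hy.
    rewrite <- Hy, pi2_cp in Hj. lia.
Qed.

Lemma c_pi1_1 : comput 1 (fun v => pi1 (nth 0 v 0)).
Proof.
  eapply comput_ext; [intros; symmetry; apply pi1_bmin|]. 
  apply c_bmin; [|cpt]. apply c_bex; [|cpt]. apply c_eqb; [apply c_cp|]; cpt.
Qed.
Lemma c_pi1 k A : comput k A -> comput k (fun xs => pi1 (A xs)).
Proof. apply lift1, c_pi1_1. Qed.
Lemma c_pi2_1 : comput 1 (fun v => pi2 (nth 0 v 0)).
Proof.
  eapply comput_ext; [intros; symmetry; apply pi2_bmin|]. 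
  apply c_bmin; [|cpt]. apply c_eqb; [apply c_cp|]; cpt. apply c_pi1. cpt.
Qed.
Lemma c_pi2 k A : comput k A -> comput k (fun xs => pi2 (A xs)).
Proof. apply lift1, c_pi2_1. Qed.

Fixpoint enc (l : list nat) : nat := match l with [] => 0 | x :: l => S (cp x (enc l)) end.
Definition consc x l := S (cp x l).
Definition hdc n := pi1 (pred n).
Definition tlc n := pi2 (pred n).
Definition nthc i l := hdc (Nat.iter i tlc l).
Definition lenc l := bmin (S l) (fun k => Nat.iter k tlc l =? 0).

Lemma hdc_cons x l : hdc (consc x l) = x.
Proof. unfold hdc, consc. simpl. apply pi1_cp. Qed.
Lemma tlc_cons x l : tlc (consc x l) = l.
Proof. unfold tlc, consc. simpl. apply pi2_cp. Qed.
Lemma enc_cons x l : enc (x :: l) = consc x (enc l).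
Proof. reflexivity. Qed.
Lemma tlc_lt n : 0 < n -> tlc n < n.
Proof. unfold tlc. pose proof (pi2_le (pred n)). lia. Qed.
Lemma tlc_le n : tlc n <= n.
Proof. unfold tlc. pose proof (pi2_le (pred n)). lia. Qed.
Lemma hdc_le n : hdc n <= n.
Proof. unfold hdc. pose proof (pi1_le (pred n)). lia. Qed.
Lemma hdc0 : hdc 0 = 0.
Proof. reflexivity. Qed.
Lemma tlc0 : tlc 0 = 0.
Proof. reflexivity. Qed.

Lemma tlc_enc l : tlc (enc l) = enc (tl l).
Proof. destruct l; simpl. reflexivity. apply tlc_cons. Qed.
Lemma tl_skipn k (l : list nat) : tl (skipn k l) = skipn (S k) l.
Proof. revert l; induction k; intros [|x l]; simpl; auto. Qed.
Lemma iter_tlc_enc k l : Nat.iter k tlc (enc l) = enc (skipn k l).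
Proof.
  induction k; simpl; auto. rewrite IHk, tlc_enc, tl_skipn. reflexivity.
Qed.

Lemma nthc_enc i l : nthc i (enc l) = nth i l 0.
Proof.
  unfold nthc. rewrite iter_tlc_enc. revert l; induction i; intros [|x l]; simpl; auto.
  all: try apply hdc_cons; try (destruct i; reflexivity).
Qed.

Lemma enc_ge l : length l <= enc l.
Proof. induction l; simpl; auto. pose proof (cp_ge a (enc l)). lia. Qed.

Lemma enc_zero l : enc l = 0 -> l = [].
Proof. destruct l; simpl; auto; discriminate. Qed.

Lemma lenc_enc l : lenc (enc l) = length l.
Proof.
  unfold lenc. apply bmin_spec.
  - pose proof (enc_ge l); lia.
  - rewrite iter_tlc_enc, skipn_all. reflexivity.
  - intros j Hj. rewrite iter_tlc_enc. apply Nat.eqb_neq. intros H. apply enc_zero in H.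
    assert (length (skipn j l) = 0) by (rewrite H; auto). rewrite length_skipn in H0. lia.
Qed.

Lemma enc_inj l1 l2 : enc l1 = enc l2 -> l1 = l2.
Proof.
  revert l2; induction l1; intros [|b l2] H; simpl in *; try discriminate; auto.
  injection H as H. apply cp_inj in H as [-> H]. f_equal; auto.
Qed.

Lemma enc_surj n : exists l, enc l = n.
Proof.
  induction n as [n IH] using lt_wf_ind. destruct n. exists []; auto.
  destruct (IH (pi2 n)) as [l Hl]. pose proof (pi2_le n); lia.
  exists (pi1 n :: l). simpl. rewrite Hl, cp_pi. auto.
Qed.

Lemma nthc_le i l : nthc i l <= l.
Proof.
  unfold nthc. eapply Nat.le_trans; [apply hdc_le|]. induction i; simpl; auto.
  pose proof (tlc_le (Nat.iter i tlc l)). lia.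
Qed.

Lemma c_tlc k A : comput k A -> comput k (fun xs => tlc (A xs)).
Proof. intros. unfold tlc. apply c_pi2. apply c_pred. auto. Qed.
Lemma c_hdc k A : comput k A -> comput k (fun xs => hdc (A xs)).
Proof. intros. unfold hdc. apply c_pi1. apply c_pred. auto. Qed.
Lemma c_consc k A B : comput k A -> comput k B -> comput k (fun xs => consc (A xs) (B xs)).
Proof. intros. unfold consc. apply c_succ. apply c_cp; auto. Qed.
Lemma c_nthc k A B : comput k A -> comput k B -> comput k (fun xs => nthc (A xs) (B xs)).
Proof. intros. unfold nthc. apply c_hdc. apply c_iter; auto. apply c_tlc, c_proj. Qed.
Lemma c_lenc k A : comput k A -> comput k (fun xs => lenc (A xs)).
Proof.
  intros HA. apply (lift1 lenc); auto. unfold lenc.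
  apply c_bmin; [|cpt]. apply c_eqb; [|cpt]. apply c_iter; cpt. apply c_tlc, c_proj.
Qed.

Ltac cpt_user ::= first [ apply c_nthc | apply c_lenc | apply c_consc | apply c_hdc | apply c_tlc | apply c_pi1 | apply c_pi2 | apply c_cp ].

Fixpoint eval_det c xs y (d : eval c xs y) {struct d} : forall y', eval c xs y' -> y = y'
with evals_det gs xs ys (d : evals gs xs ys) {struct d} : forall ys', evals gs xs ys' -> ys = ys'.
Proof.
  - destruct d as [| | | f gs xs ys y e d | f g xs y d | f g n xs r y d1 d2 | f xs y d e]; intros y' d'.
    + inversion d'; auto.
    + inversion d'; auto.
    + inversion d'; auto.
    + inversion d'; subst. match goal with H : evals _ _ _ |- _ => pose proof (evals_det _ _ _ e _ H) end. subst. 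
      match goal with H : eval f _ _ |- _ => exact (eval_det _ _ _ d _ H) end.
    + inversion d'; subst. match goal with H : eval f _ _ |- _ => exact (eval_det _ _ _ d _ H) end.
    + inversion d'; subst. match goal with H : eval (PPrec _ _) _ _ |- _ => pose proof (eval_det _ _ _ d1 _ H) end. subst.
      match goal with H : eval g _ _ |- _ => exact (eval_det _ _ _ d2 _ H) end.
    + inversion d' as [| | | | | | f' xs' y'' H2 H3]; subst.
      destruct (lt_eq_lt_dec y y') as [[Hlt|Heq]|Hlt]; auto.
      * destruct (H3 y Hlt) as [v [Hv Hev]]. pose proof (eval_det _ _ _ d _ Hev). lia.
      * destruct (e y' Hlt) as [v [Hv Hev]]. pose proof (eval_det _ _ _ Hev _ H2). lia.
  - destruct d as [xs | g gs xs y ys e d]; intros ys' d'.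
    + inversion d'; auto.
    + inversion d'; subst. f_equal. 
      match goal with H : eval g _ _ |- _ => exact (eval_det _ _ _ e _ H) end.
      match goal with H : evals gs _ _ |- _ => exact (evals_det _ _ _ d _ H) end.
Qed.

Fixpoint encp (c : prf) : nat :=
  match c with
  | PZero => cp 0 0
  | PSucc => cp 1 0
  | PProj i => cp 2 i
  | PComp f gs => cp 3 (cp (encp f) (enc (map encp gs)))
  | PPrec f g => cp 4 (cp (encp f) (encp g))
  | PMin f => cp 5 (encp f)
  end.

Inductive Rep : prf -> nat -> Prop :=
| R0 e : pi1 e = 0 -> Rep PZero e
| R1 e : pi1 e = 1 -> Rep PSucc e
| R2 e : pi1 e = 2 -> Rep (PProj (pi2 e)) e
| R3 e f gs : pi1 e = 3 -> Rep f (pi1 (pi2 e)) -> length gs = lenc (pi2 (pi2 e)) ->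
    (forall k, k < length gs -> Rep (nth k gs PZero) (nthc k (pi2 (pi2 e)))) -> Rep (PComp f gs) e
| R4 e f g : pi1 e = 4 -> Rep f (pi1 (pi2 e)) -> Rep g (pi2 (pi2 e)) -> Rep (PPrec f g) e
| R5 e f : 5 <= pi1 e -> Rep f (pi2 e) -> Rep (PMin f) e.

Lemma Rep_fun c e : Rep c e -> forall c', Rep c' e -> c = c'.
Proof.
  induction 1; intros c' H'; inversion H'; subst; try lia; auto.
  - f_equal; auto. apply nth_ext with PZero PZero. lia. intros n Hn. apply H3; auto.
    apply H7. lia.
  - f_equal; auto.
  - f_equal; auto.
Qed.

Lemma choice_list (P : nat -> prf -> Prop) n : (forall k, k < n -> exists c, P k c) ->
  exists l, length l = n /\ forall k, k < n -> P k (nth k l PZero).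
Proof.
  induction n; intros H. exists []; split; auto; intros; lia.
  assert (H' : forall k, k < n -> exists c, P k c) by (intros; apply H; lia).
  destruct (IHn H') as [l [Hl Hk]].
  destruct (H n) as [c Hc]. lia. exists (l ++ [c]). split. rewrite length_app; simpl; lia.
  intros k Hk'. destruct (Nat.eq_dec k n). subst k. rewrite app_nth2 by lia. rewrite Hl, Nat.sub_diag. auto.
  rewrite app_nth1 by lia. apply Hk; lia.
Qed.

Lemma Rep_ex e : exists c, Rep c e.
Proof.
  induction e as [e IH] using lt_wf_ind.
  destruct (pi1 e) as [|[|[|[|[|t]]]]] eqn:Ht.
  - exists PZero; constructor; auto.
  - exists PSucc; constructor; auto.
  - exists (PProj (pi2 e)); constructor; auto.
  - assert (Hb : pi2 e < e) by (apply pi2_lt; lia).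
    destruct (IH (pi1 (pi2 e))) as [f Hf]. pose proof (pi1_le (pi2 e)); lia.
    destruct (choice_list (fun k c => Rep c (nthc k (pi2 (pi2 e)))) (lenc (pi2 (pi2 e)))) as [gs [Hl Hgs]].
    { intros k _. apply IH. pose proof (nthc_le k (pi2 (pi2 e))). pose proof (pi2_le (pi2 e)). lia. }
    exists (PComp f gs). constructor; auto. intros. apply Hgs. lia.
  - assert (Hb : pi2 e < e) by (apply pi2_lt; lia).
    destruct (IH (pi1 (pi2 e))) as [f Hf]. pose proof (pi1_le (pi2 e)); lia.
    destruct (IH (pi2 (pi2 e))) as [g Hg]. pose proof (pi2_le (pi2 e)); lia.
    exists (PPrec f g). constructor; auto.
  - assert (Hb : pi2 e < e) by (apply pi2_lt; lia).
    destruct (IH (pi2 e)) as [f Hf]. auto.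
    exists (PMin f). constructor; auto. lia.
Qed.

Fixpoint Rep_enc c : Rep c (encp c).
Proof.
  destruct c; simpl.
  - constructor. apply pi1_cp.
  - constructor. apply pi1_cp.
  - rewrite <- (pi2_cp 2 n) at 1. constructor. apply pi1_cp.
  - constructor. apply pi1_cp. rewrite !pi2_cp, pi1_cp. apply Rep_enc.
    rewrite !pi2_cp, lenc_enc, length_map. auto.
    intros k Hk. rewrite !pi2_cp, nthc_enc.
    replace (nth k (map encp l) 0) with (encp (nth k l PZero)).
    2:{ symmetry. exact (map_nth encp l PZero k). }
    clear Hk. revert k.
    refine ((fix aux (l : list prf) : forall k, Rep (nth k l PZero) (encp (nth k l PZero)) :=
      match l with [] => fun k => _ | a :: l' => fun k => match k with 0 => Rep_enc a | S k => aux l' k end end) l).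
    destruct k; simpl; constructor; apply pi1_cp.
  - constructor. apply pi1_cp. rewrite pi2_cp, pi1_cp. apply Rep_enc. rewrite !pi2_cp. apply Rep_enc.
  - constructor. rewrite pi1_cp; lia. rewrite pi2_cp. apply Rep_enc.
Qed.

Definition jdg c x y := cp c (cp x y).

Definition exb (get : nat -> nat) (i : nat) (p : nat -> bool) : bool := bex i (fun j => p (get j)).

Definition just_g (get : nat -> nat) (i : nat) : bool :=
  let J := get i in
  let c := pi1 J in let xs := pi1 (pi2 J) in let y := pi2 (pi2 J) in
  let t := pi1 c in let b := pi2 c in
  if t =? 0 then y =? 0
  else if t =? 1 then y =? S (hdc xs)
  else if t =? 2 then y =? nthc b xs
  else if t =? 3 then
    exb get i (fun J1 => (pi1 J1 =? pi1 b) && (pi2 (pi2 J1) =? y) &&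
       (lenc (pi1 (pi2 J1)) =? lenc (pi2 b)) &&
       ball (lenc (pi2 b)) (fun k => exb get i (fun J2 => (pi1 J2 =? nthc k (pi2 b)) &&
            (pi1 (pi2 J2) =? xs) && (pi2 (pi2 J2) =? nthc k (pi1 (pi2 J1))))))
  else if t =? 4 then
    negb (xs =? 0) &&
    (if hdc xs =? 0 then
       exb get i (fun J1 => (pi1 J1 =? pi1 b) && (pi1 (pi2 J1) =? tlc xs) && (pi2 (pi2 J1) =? y))
     else exb get i (fun J1 => exb get i (fun J2 =>
        (pi1 J1 =? c) && (pi1 (pi2 J1) =? consc (pred (hdc xs)) (tlc xs)) &&
        (pi1 J2 =? pi2 b) &&
        (pi1 (pi2 J2) =? consc (pred (hdc xs)) (consc (pi2 (pi2 J1)) (tlc xs))) &&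
        (pi2 (pi2 J2) =? y))))
  else
    exb get i (fun J1 => (pi1 J1 =? b) && (pi1 (pi2 J1) =? consc y xs) && (pi2 (pi2 J1) =? 0)) &&
    ball y (fun z => exb get i (fun J2 => (pi1 J2 =? b) && (pi1 (pi2 J2) =? consc z xs) &&
                                      negb (pi2 (pi2 J2) =? 0))).

Definition valid_l (Ls : list nat) := forall i, i < length Ls -> just_g (fun j => nth j Ls 0) i = true.

Lemma evals_nth gs xs ys : length gs = length ys ->
  (forall k, k < length gs -> eval (nth k gs PZero) xs (nth k ys 0)) -> evals gs xs ys.
Proof.
  revert ys; induction gs; intros [|y ys] Hl H; simpl in *; try discriminate; constructor.
  apply (H 0); lia. apply IHgs. lia. intros k Hk. apply (H (S k)). lia.
Qed.

Lemma hdc_enc l : hdc (enc l) = hd 0 l.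
Proof. destruct l; simpl. reflexivity. apply hdc_cons. Qed.

Ltac bsplit := repeat match goal with
  | H : (_ && _) = true |- _ => apply andb_prop in H; destruct H
  | H : (_ =? _) = true |- _ => apply Nat.eqb_eq in H
  | H : negb _ = true |- _ => apply negb_true_iff in H
  | H : (_ =? _) = false |- _ => apply Nat.eqb_neq in H
  | H : bex _ _ = true |- _ => apply bex_spec in H; destruct H as [? [? ?]]
  end.

Lemma sound Ls : valid_l Ls -> forall i, i < length Ls -> forall c xs,
  Rep c (pi1 (nth i Ls 0)) -> enc xs = pi1 (pi2 (nth i Ls 0)) -> eval c xs (pi2 (pi2 (nth i Ls 0))).
Proof.
  intros HV i. induction i as [i IH] using lt_wf_ind. intros Hi c xs HR Hx.
  pose proof (HV i Hi) as Hj. unfold just_g, exb in Hj. cbv zeta in Hj.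
  set (J := nth i Ls 0) in *. set (e := pi1 J) in *. rewrite <- Hx in Hj.
  set (y := pi2 (pi2 J)) in *. clearbody J. clearbody e y. revert Hj.
  destruct (Nat.eqb_spec (pi1 e) 0) as [H0|H0].
  { intros Hj. bsplit. subst y. inversion HR; subst; try lia. constructor. }
  destruct (Nat.eqb_spec (pi1 e) 1) as [H1|H1].
  { intros Hj. bsplit. subst y. inversion HR; subst; try lia. rewrite hdc_enc. constructor. }
  destruct (Nat.eqb_spec (pi1 e) 2) as [H2|H2].
  { intros Hj. bsplit. subst y. inversion HR; subst; try lia. rewrite nthc_enc. constructor. }
  destruct (Nat.eqb_spec (pi1 e) 3) as [H3|H3].
  { intros Hj. bsplit. inversion HR; subst; try lia.
    rename x into j1. destruct (enc_surj (pi1 (pi2 (nth j1 Ls 0)))) as [ys Hys].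
    apply (e_comp _ _ _ ys).
    - apply evals_nth. rewrite H10, <- H6, <- Hys, lenc_enc. auto.
      intros k Hk. apply ball_spec with (i := k) in H5; [|lia]. bsplit.
      rename x into j2. rewrite <- nthc_enc, Hys. 
      match goal with H : pi2 (pi2 (nth j2 Ls 0)) = _ |- _ => rewrite <- H end.
      apply IH; auto. all: try lia.
      all: try (match goal with H : pi1 (nth _ _ 0) = nthc _ _ |- _ => rewrite H end; auto).
    - apply IH; auto. lia. rewrite H4. auto. }
  destruct (Nat.eqb_spec (pi1 e) 4) as [H4|H4].
  { intros Hj. bsplit. inversion HR; subst; try lia.
    destruct xs as [|x0 xs]. simpl in H. lia.
    rewrite enc_cons, hdc_cons, tlc_cons in H5. destruct x0.
    - rewrite Nat.eqb_refl in H5. bsplit. constructor. 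
      match goal with Hy : pi2 (pi2 (nth _ _ 0)) = y |- _ => rewrite <- Hy end.
      apply IH; auto. lia.
      match goal with Hy : pi1 (nth _ _ 0) = _ |- _ => rewrite Hy end. auto. 
    - simpl in H5. bsplit. rename x into j1, x1 into j2.
      econstructor.
      + apply IH with (m := j1); auto. lia.
        match goal with Hy : pi1 (nth j1 Ls 0) = e |- _ => rewrite Hy end. auto.
      + rewrite <- H11. apply IH; auto. lia. rewrite H13. auto. }
  { intros Hj. bsplit. inversion HR; subst; try lia. rename x into j1.
    constructor.
    - rewrite <- H7. apply IH; auto. lia. rewrite H6; auto.
    - intros z Hz. apply ball_spec with (i := z) in H5; auto. bsplit. rename x into j2.
      exists (pi2 (pi2 (nth j2 Ls 0))). split; auto. apply IH; auto. lia.
      match goal with Hy : pi1 (nth j2 Ls 0) = _ |- _ => rewrite Hy end. auto.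
      all: try (match goal with Hy : pi1 (pi2 (nth _ _ 0)) = _ |- _ => rewrite Hy end; reflexivity). }
Qed.

Lemma exb_mono g g' i i' (p p' : nat -> bool) : (forall j, j < i -> exists j', j' < i' /\ g' j' = g j) ->
  (forall J, p J = true -> p' J = true) -> exb g i p = true -> exb g' i' p' = true.
Proof.
  unfold exb. intros Hs Hp H. apply bex_spec in H as [j [Hj H]]. destruct (Hs j Hj) as [j' [Hj' E]].
  apply bex_spec. exists j'. split; auto. rewrite E. auto.
Qed.

Lemma ball_mono n (p p' : nat -> bool) : (forall k, p k = true -> p' k = true) -> ball n p = true -> ball n p' = true.
Proof. intros H H'. rewrite ball_spec in *. auto. Qed.

Lemma andb_mono a b a' b' : (a = true -> a' = true) -> (b = true -> b' = true) -> a && b = true -> a' && b' = true.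
Proof. intros H1 H2 H. apply andb_prop in H as [? ?]. rewrite H1, H2; auto. Qed.

Lemma just_sim g g' i i' : (forall j, j < i -> exists j', j' < i' /\ g' j' = g j) -> g' i' = g i ->
  just_g g i = true -> just_g g' i' = true.
Proof.
  intros Hs Hi. unfold just_g. cbv zeta. rewrite Hi.
  destruct (pi1 (pi1 (g i)) =? 0); auto.
  destruct (pi1 (pi1 (g i)) =? 1); auto.
  destruct (pi1 (pi1 (g i)) =? 2); auto.
  destruct (pi1 (pi1 (g i)) =? 3).
  { apply exb_mono; auto. intros J1. apply andb_mono; auto. apply ball_mono. intros k.
    apply exb_mono; auto. }
  destruct (pi1 (pi1 (g i)) =? 4).
  { apply andb_mono; auto. destruct (hdc _ =? 0). apply exb_mono; auto.
    apply exb_mono; auto. intros J1. apply exb_mono; auto. }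
  apply andb_mono. apply exb_mono; auto. apply ball_mono. intros k. apply exb_mono; auto.
Qed.

Lemma valid_app L1 L2 : valid_l L1 -> valid_l L2 -> valid_l (L1 ++ L2).
Proof.
  intros H1 H2 i Hi. rewrite length_app in Hi. destruct (Nat.lt_ge_cases i (length L1)).
  - apply (just_sim (fun j => nth j L1 0)) with (i := i); auto.
    + intros j Hj. exists j. split; auto. rewrite app_nth1; auto. lia.
    + rewrite app_nth1; auto.
  - apply (just_sim (fun j => nth j L2 0)) with (i := i - length L1).
    + intros j Hj. exists (length L1 + j). split. lia. rewrite app_nth2 by lia. f_equal. lia.
    + rewrite app_nth2 by lia. auto.
    + apply H2. lia.
Qed.

Lemma valid_snoc L J : valid_l L -> just_g (fun j => nth j (L ++ [J]) 0) (length L) = true -> valid_l (L ++ [J]).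
Proof.
  intros H1 H2 i Hi. rewrite length_app in Hi. simpl in Hi. destruct (Nat.lt_ge_cases i (length L)).
  - apply (just_sim (fun j => nth j L 0)) with (i := i); auto.
    + intros j Hj. exists j. split; auto. rewrite app_nth1; auto. lia.
    + rewrite app_nth1; auto.
  - replace i with (length L) by lia. auto.
Qed.

Lemma exb_in L M x (p : nat -> bool) : In x L -> p x = true -> exb (fun j => nth j (L ++ M) 0) (length L) p = true.
Proof.
  intros Hx Hp. apply In_nth with (d := 0) in Hx as [j [Hj E]]. unfold exb. apply bex_spec.
  exists j. split; auto. rewrite app_nth1; auto. rewrite E; auto.
Qed.

Lemma nth_snoc L J : nth (length L) (L ++ [J]) 0 = J.
Proof. rewrite app_nth2, Nat.sub_diag by lia. reflexivity. Qed.

Lemma jc_jdg c x y : pi1 (jdg c x y) = c.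
Proof. apply pi1_cp. Qed.
Lemma jx_jdg c x y : pi1 (pi2 (jdg c x y)) = x.
Proof. unfold jdg. rewrite pi2_cp. apply pi1_cp. Qed.
Lemma jy_jdg c x y : pi2 (pi2 (jdg c x y)) = y.
Proof. unfold jdg. rewrite !pi2_cp. auto. Qed.

Lemma valid_nil : valid_l [].
Proof. intros i H; simpl in H; lia. Qed.

Lemma collect (P : nat -> nat -> Prop) n : (forall z, z < n -> exists L, valid_l L /\ exists v, P z v /\ In v L) ->
  exists L, valid_l L /\ forall z, z < n -> exists v, P z v /\ In v L.
Proof.
  induction n; intros H. exists []. split. apply valid_nil. intros; lia.
  destruct IHn as [L [HL HP]]. intros; apply H; lia.
  destruct (H n) as [L' [HL' [v [Hv Hin]]]]. lia.
  exists (L ++ L'). split. apply valid_app; auto. intros z Hz. destruct (Nat.eq_dec z n).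
  subst z. exists v. split; auto. apply in_or_app; auto.
  destruct (HP z) as [w [Hw Hin']]. lia. exists w. split; auto. apply in_or_app; auto.
Qed.

Lemma tag_enc c : pi1 (encp c) = match c with PZero => 0 | PSucc => 1 | PProj _ => 2 | PComp _ _ => 3 | PPrec _ _ => 4 | PMin _ => 5 end.
Proof. destruct c; simpl; apply pi1_cp. Qed.
Lemma body_enc c : pi2 (encp c) = match c with PZero => 0 | PSucc => 0 | PProj i => i | PComp f gs => cp (encp f) (enc (map encp gs)) | PPrec f g => cp (encp f) (encp g) | PMin f => encp f end.
Proof. destruct c; simpl; apply pi2_cp. Qed.

Ltac prep_new Ht := unfold just_g; cbv zeta; rewrite nth_snoc, jc_jdg, jx_jdg, jy_jdg, Ht; cbn [Nat.eqb].

Fixpoint complete c xs y (d : eval c xs y) {struct d} : forall e, Rep c e -> exists L, valid_l L /\ In (jdg e (enc xs) y) L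
with completes gs xs ys (d : evals gs xs ys) {struct d} : forall r : nat -> nat,
   (forall k, k < length gs -> Rep (nth k gs PZero) (r k)) -> exists L, valid_l L /\ length gs = length ys /\
   forall k, k < length gs -> In (jdg (r k) (enc xs) (nth k ys 0)) L.
Proof.
  - destruct d as [xs | xs | i xs | f gs xs ys y Hgs Hf | f g xs y Hf | f g n xs r y Hr Hg | f xs y Hf Hz];
      intros e HR; inversion HR; subst.
    + exists ([] ++ [jdg e (enc xs) 0]). split. apply valid_snoc. apply valid_nil.
      prep_new H. reflexivity. apply in_or_app; simpl; auto.
    + exists ([] ++ [jdg e (enc xs) (S (hd 0 xs))]). split. apply valid_snoc. apply valid_nil.
      prep_new H. rewrite hdc_enc. apply Nat.eqb_refl. apply in_or_app; simpl; auto.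
    + exists ([] ++ [jdg e (enc xs) (nth (pi2 e) xs 0)]). split. apply valid_snoc. apply valid_nil.
      prep_new H0. rewrite nthc_enc. apply Nat.eqb_refl. apply in_or_app; simpl; auto.
    + match goal with H : pi1 e = _ |- _ => rename H into Ht end.
      match goal with H : Rep f _ |- _ => rename H into Hrf end.
      match goal with H : length gs = _ |- _ => rename H into Hlen' end.
      match goal with H : forall k, _ -> Rep _ _ |- _ => rename H into Hrg end.
      destruct (completes _ _ _ Hgs (fun k => nthc k (pi2 (pi2 e))) Hrg) as [L1 [HL1 [Hlen HI1]]].
      destruct (complete _ _ _ Hf _ Hrf) as [L2 [HL2 HI2]].
      set (J := jdg e (enc xs) y).
      exists ((L1 ++ L2) ++ [J]). split; [|apply in_or_app; simpl; auto].
      apply valid_snoc. apply valid_app; auto.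
      unfold J. prep_new Ht.
      apply (exb_in _ _ (jdg (pi1 (pi2 e)) (enc ys) y)). apply in_or_app; auto.
      rewrite jc_jdg, jx_jdg, jy_jdg, !Nat.eqb_refl, !lenc_enc, <- Hlen, Hlen', Nat.eqb_refl. simpl.
      apply ball_spec. intros k Hk.
      apply (exb_in _ _ (jdg (nthc k (pi2 (pi2 e))) (enc xs) (nth k ys 0))). apply in_or_app; left. apply HI1. lia.
      rewrite jc_jdg, jx_jdg, jy_jdg, !nthc_enc, !Nat.eqb_refl. reflexivity.
    + match goal with H : pi1 e = _ |- _ => rename H into Ht end.
      match goal with H : Rep f _ |- _ => rename H into Hrf end.
      destruct (complete _ _ _ Hf _ Hrf) as [L1 [HL1 HI1]].
      set (J := jdg e (enc (0 :: xs)) y).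
      exists (L1 ++ [J]). split; [|apply in_or_app; simpl; auto].
      apply valid_snoc; auto.
      unfold J. prep_new Ht. rewrite enc_cons, hdc_cons, tlc_cons. simpl.
      apply (exb_in _ _ (jdg (pi1 (pi2 e)) (enc xs) y)); auto.
      rewrite jc_jdg, jx_jdg, jy_jdg, !Nat.eqb_refl. reflexivity.
    + match goal with H : pi1 e = _ |- _ => rename H into Ht end.
      match goal with H : Rep g _ |- _ => rename H into Hrg end.
      destruct (complete _ _ _ Hr _ HR) as [L1 [HL1 HI1]].
      destruct (complete _ _ _ Hg _ Hrg) as [L2 [HL2 HI2]].
      set (J := jdg e (enc (S n :: xs)) y).
      exists ((L1 ++ L2) ++ [J]). split; [|apply in_or_app; simpl; auto].
      apply valid_snoc. apply valid_app; auto.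
      unfold J. prep_new Ht. rewrite enc_cons, hdc_cons, tlc_cons. simpl.
      apply (exb_in _ _ (jdg e (enc (n :: xs)) r)). apply in_or_app; auto.
      unfold exb. apply bex_spec.
      apply In_nth with (d := 0) in HI2 as [j2 [Hj2 E2]].
      exists (length L1 + j2). split. rewrite length_app; lia.
      rewrite app_nth1 by (rewrite length_app; lia). rewrite app_nth2 by lia. rewrite Nat.add_comm, Nat.add_sub. rewrite E2.
      rewrite !jc_jdg, !jx_jdg, !jy_jdg. simpl. rewrite !Nat.eqb_refl. reflexivity.
    + match goal with H : 5 <= pi1 e |- _ => rename H into Ht end.
      match goal with H : Rep f _ |- _ => rename H into Hrf end.
      destruct (complete _ _ _ Hf _ Hrf) as [L1 [HL1 HI1]].
      assert (Hc : forall z, z < y -> exists L, valid_l L /\ exists v, (exists w, v = jdg (pi2 e) (enc (z :: xs)) w /\ w <> 0) /\ In v L).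
      { intros z Hzy. destruct (Hz z Hzy) as [w [Hw Hev]]. destruct (complete _ _ _ Hev _ Hrf) as [L [HL HI]].
        exists L. split; auto. exists (jdg (pi2 e) (enc (z :: xs)) w). split; auto. exists w; auto. }
      destruct (collect _ y Hc) as [L2 [HL2 HI2]].
      set (J := jdg e (enc xs) y).
      exists ((L1 ++ L2) ++ [J]). split; [|apply in_or_app; simpl; auto].
      apply valid_snoc. apply valid_app; auto.
      unfold J. unfold just_g; cbv zeta; rewrite nth_snoc, jc_jdg, jx_jdg, jy_jdg.
      destruct (pi1 e) as [|[|[|[|[|t]]]]]; try lia. cbn [Nat.eqb].
      apply andb_true_intro. split.
      apply (exb_in _ _ (jdg (pi2 e) (enc (y :: xs)) 0)). apply in_or_app; auto.
      rewrite jc_jdg, jx_jdg, jy_jdg, !Nat.eqb_refl. reflexivity.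
      apply ball_spec. intros z Hzy. destruct (HI2 z Hzy) as [v [[w [-> Hw]] Hin]].
      apply (exb_in _ _ (jdg (pi2 e) (enc (z :: xs)) w)). apply in_or_app; auto.
      rewrite jc_jdg, jx_jdg, jy_jdg, !Nat.eqb_refl. simpl. destruct w; [lia|reflexivity].
  - destruct d as [xs | g gs xs y ys Hg Hgs]; intros rr Hrr.
    + exists []. split. apply valid_nil. split; auto. simpl; intros; lia.
    + destruct (complete _ _ _ Hg (rr 0)) as [L1 [HL1 HI1]]. apply (Hrr 0). simpl; lia.
      destruct (completes _ _ _ Hgs (fun k => rr (S k))) as [L2 [HL2 [Hlen HI2]]].
      { intros k Hk. apply (Hrr (S k)). simpl; lia. }
      exists (L1 ++ L2). split. apply valid_app; auto. split. simpl; auto.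
      intros [|k] Hk; simpl. apply in_or_app; auto. apply in_or_app; right. apply HI2. simpl in Hk; lia.
Qed.

Definition validn (L : nat) : bool := ball (lenc L) (fun i => just_g (fun j => nthc j L) i).

Lemma just_ext g g' i : (forall j, g' j = g j) -> just_g g i = just_g g' i.
Proof.
  intros H. apply eq_true_iff_eq. split; apply just_sim; auto; intros j Hj; exists j; split; auto.
Qed.

Lemma validn_enc Ls : validn (enc Ls) = true <-> valid_l Ls.
Proof.
  unfold validn, valid_l. rewrite ball_spec, lenc_enc. split; intros H i Hi; specialize (H i Hi).
  - rewrite <- H. apply just_ext. intros j; rewrite nthc_enc; auto.
  - rewrite <- H. apply just_ext. intros j; rewrite nthc_enc; auto.
Qed.

Definition der (e x y m : nat) : bool :=
  bex m (fun L => validn L && bex (lenc L) (fun j => nthc j L =? jdg e (consc x 0) y)).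

Lemma der_sound e x y m c : der e x y m = true -> Rep c e -> eval c [x] y.
Proof.
  unfold der. intros H HR. apply bex_spec in H as [L [_ H]]. apply andb_prop in H as [HV H].
  destruct (enc_surj L) as [Ls <-]. apply validn_enc in HV. apply bex_spec in H as [j [Hj E]].
  apply Nat.eqb_eq in E. rewrite lenc_enc in Hj. rewrite nthc_enc in E.
  pose proof (sound Ls HV j Hj c [x]) as S. rewrite E, jc_jdg, jx_jdg, jy_jdg in S. apply S; auto.
Qed.

Lemma der_mono e x y m m' : m <= m' -> der e x y m = true -> der e x y m' = true.
Proof.
  unfold der. intros Hm H. apply bex_spec in H as [L [HL H]]. apply bex_spec. exists L. split; auto. lia.
Qed.

Lemma der_complete c e x y : eval c [x] y -> Rep c e -> exists m, der e x y m = true.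
Proof.
  intros H HR. destruct (complete _ _ _ H _ HR) as [Ls [HV HI]]. exists (S (enc Ls)).
  unfold der. apply bex_spec. exists (enc Ls). split. lia. apply andb_true_intro. split.
  apply validn_enc; auto. apply bex_spec. apply In_nth with (d := 0) in HI as [j [Hj E]].
  exists j. rewrite lenc_enc, nthc_enc. split; auto. rewrite E. apply Nat.eqb_eq. reflexivity.
Qed.

Lemma c_jdg k A B C : comput k A -> comput k B -> comput k C -> comput k (fun xs => jdg (A xs) (B xs) (C xs)).
Proof. intros. unfold jdg. cpt. all: auto. Qed.

Lemma c_validn1 : comput 1 (fun v => b2n (validn (nth 0 v 0))).
Proof. unfold validn, just_g, exb. cpt. Qed.

Definition half (n : nat) : nat := bmin (S n) (fun q => n <? 2 * q + 2).
Definition oddb (n : nat) : bool := negb (n =? 2 * half n).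

Lemma half_spec p (bt : bool) : half (2 * p + b2n bt) = p.
Proof.
  unfold half. apply bmin_spec. destruct bt; simpl; lia.
  apply Nat.ltb_lt. destruct bt; simpl; lia.
  intros j Hj. apply Nat.ltb_ge. destruct bt; simpl; lia.
Qed.
Lemma oddb_spec p bt : oddb (2 * p + b2n bt) = bt.
Proof. unfold oddb. rewrite half_spec. destruct bt; simpl. apply negb_true_iff, Nat.eqb_neq; lia.
  rewrite Nat.add_0_r, Nat.eqb_refl. reflexivity. Qed.

Definition lg (a : nat) : nat := bmin (S a) (fun k => Nat.iter k half a <=? 1).
Definition bitc (a i : nat) : bool := oddb (Nat.iter (lg a - 1 - i) half a).

Lemma prefix_S X m : prefix_code X (S m) = 2 * prefix_code X m + b2n (X m).
Proof. reflexivity. Qed.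
Lemma prefix_pos X m : 1 <= prefix_code X m.
Proof. induction m; simpl; lia. Qed.
Lemma prefix_ge2 X m : 1 <= m -> 2 <= prefix_code X m.
Proof. destruct m. lia. intros _. rewrite prefix_S. pose proof (prefix_pos X m). lia. Qed.
Lemma prefix_ge X m : m <= prefix_code X m.
Proof. induction m; simpl. lia. pose proof (prefix_pos X m). destruct (X m); lia. Qed.

Lemma iter_half_prefix X m k : k <= m -> Nat.iter k half (prefix_code X m) = prefix_code X (m - k).
Proof.
  induction k; intros Hk. simpl. f_equal; lia.
  simpl. rewrite IHk by lia. replace (m - k) with (S (m - S k)) by lia. rewrite prefix_S, half_spec. reflexivity.
Qed.

Lemma lg_prefix X m : lg (prefix_code X m) = m.
Proof.
  unfold lg. apply bmin_spec. pose proof (prefix_ge X m). lia.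
  rewrite iter_half_prefix, Nat.sub_diag by lia. reflexivity.
  intros j Hj. rewrite iter_half_prefix by lia. apply Nat.leb_gt. apply prefix_ge2. lia.
Qed.

Lemma bitc_prefix X m i : i < m -> bitc (prefix_code X m) i = X i.
Proof.
  intros Hi. unfold bitc. rewrite lg_prefix, iter_half_prefix by lia.
  replace (m - (m - 1 - i)) with (S i) by lia. rewrite prefix_S, oddb_spec. reflexivity.
Qed.

Lemma c_half k A : comput k A -> comput k (fun xs => half (A xs)).
Proof. apply lift1. unfold half. cpt. Qed.
Lemma c_oddb k A : comput k A -> comput k (fun xs => b2n (oddb (A xs))).
Proof. apply (lift1 (fun n => b2n (oddb n))). unfold oddb. cpt. all: try (apply c_half; cpt). Qed.
Lemma c_lg k A : comput k A -> comput k (fun xs => lg (A xs)).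
Proof. apply lift1. unfold lg. cpt. all: try (apply c_half; cpt). Qed.
Lemma c_bitc k A B : comput k A -> comput k B -> comput k (fun xs => b2n (bitc (A xs) (B xs))).
Proof. apply (lift2 (fun a i => b2n (bitc a i))). unfold bitc. apply c_oddb. apply c_iter. apply c_half; cpt.
  apply c_sub; [apply c_sub|]; cpt. all: try (apply c_lg; cpt). all: cpt. Qed.

Fixpoint cntb (n : nat) (p : nat -> bool) : nat :=
  match n with 0 => 0 | S n => cntb n p + b2n (p n) end.

Lemma c_cntb k (P : nat -> list nat -> bool) N :
  comput (S k) (fun ys => b2n (P (hd 0 ys) (tl ys))) -> comput k N ->
  comput k (fun xs => cntb (N xs) (fun i => P i xs)).
Proof.
  intros HP HN. pose proof (c_drop1 k (fun i xs => b2n (P i xs)) HP) as HP2. simpl in HP2.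
  eapply comput_ext; [|apply (c_rec k (fun _ => 0) (fun ys => nth 1 ys 0 + b2n (P (hd 0 ys) (tl (tl ys)))) N)].
  - intros xs _. simpl. induction (N xs); simpl; auto.
  - apply c_const.
  - apply c_add; auto. apply c_proj.
  - auto.
Qed.

Lemma c_der4 : comput 4 (fun v => b2n (der (nth 0 v 0) (nth 1 v 0) (nth 2 v 0) (nth 3 v 0))).
Proof. unfold der. cpt. all: try (apply (lift1 (fun L => b2n (validn L))); [apply c_validn1|cpt]). all: try (apply c_jdg; cpt). Qed.
Lemma c_der k A B C E : comput k A -> comput k B -> comput k C -> comput k E ->
  comput k (fun xs => b2n (der (A xs) (B xs) (C xs) (E xs))).
Proof. apply (lift4 (fun a b c d => b2n (der a b c d))), c_der4. Qed.

Ltac cpt_user ::= first [ apply c_der | apply c_cntb | apply c_bitc | apply c_lg | apply c_oddb | apply c_half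
  | apply c_jdg | apply c_nthc | apply c_lenc | apply c_consc | apply c_hdc | apply c_tlc | apply c_pi1 | apply c_pi2 | apply c_cp ].

Definition chk (a b e n m H : nat) : bool :=
  (n <? m) && (H <=? m) &&
  ball (S n) (fun x => bex m (fun y => der e x y m)) &&
  ball (S n) (fun x => ball (S n) (fun x' => ball m (fun y => ball m (fun y' =>
      negb (der e x y m && der e x' y' m && negb (x =? x') && (y =? y')))))) &&
  ball (S n) (fun y => bex m (fun x => der e x y m)) &&
  ball (S n) (fun x => (x <? H) || ball m (fun y => negb (der e x y m) || Bool.eqb (bitc a x) (bitc b y))) &&
  ball H (fun x => bex m (fun y => der e x y m)) &&
  (cntb H (fun i => bitc a i) =? cntb H (fun i => bex m (fun y => der e i y m && bitc b y))).

Definition runb (a m : nat) : nat := bmin m (fun i => negb (Bool.eqb (bitc a i) (bitc a 0))).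

Definition Pb (n a b : nat) : bool :=
  bex (lg a) (fun i => negb (Bool.eqb (bitc a i) (bitc b i))) &&
  (runb a (lg a) <? lg a) && (runb b (lg a) <? lg a) && (3 <=? runb a (lg a) + runb b (lg a)) &&
  bex (S (2 * (2 * (runb a (lg a) + runb b (lg a))) + 1)) (fun l =>
    ball (S n) (fun n' => if oddb l then chk b a (half l) n' (lg a) (2 * (runb a (lg a) + runb b (lg a)))
                          else chk a b (half l) n' (lg a) (2 * (runb a (lg a) + runb b (lg a))))).

Lemma c_eqbb k A B : comput k (fun xs => b2n (A xs)) -> comput k (fun xs => b2n (B xs)) -> comput k (fun xs => b2n (Bool.eqb (A xs) (B xs))).
Proof.
  intros HA HB. eapply comput_ext; [|apply (c_eqb k _ _ HA HB)]. intros xs _. cbv beta.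
  destruct (A xs), (B xs); reflexivity.
Qed.

Lemma c_chk k A B E N M H : comput k A -> comput k B -> comput k E -> comput k N -> comput k M -> comput k H ->
  comput k (fun xs => b2n (chk (A xs) (B xs) (E xs) (N xs) (M xs) (H xs))).
Proof.
  intros. assert (comput 6 (fun v => b2n (chk (nth 0 v 0) (nth 1 v 0) (nth 2 v 0) (nth 3 v 0) (nth 4 v 0) (nth 5 v 0)))).
  { unfold chk. cpt. all: try (apply c_eqbb; cpt). }
  eapply comput_ext; [|apply (c_comp k 6 _ [A;B;E;N;M;H] H6 eq_refl)]. reflexivity. repeat constructor; auto.
Qed.

Lemma c_runb k A B : comput k A -> comput k B -> comput k (fun xs => runb (A xs) (B xs)).
Proof. apply lift2. unfold runb. cpt. all: try (apply c_eqbb; cpt). Qed.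

Lemma c_Pb : comput 3 (fun v => b2n (Pb (nth 0 v 0) (nth 1 v 0) (nth 2 v 0))).
Proof.
  unfold Pb. cpt. all: try (apply c_eqbb; cpt). all: try (apply c_runb; cpt). all: try (apply c_chk; cpt). all: try (apply c_runb; cpt).
Qed.

Definition isrun (X : cantor) r := X r <> X 0 /\ forall i, i < r -> X i = X 0.
Lemma isrun_uniq X r r' : isrun X r -> isrun X r' -> r = r'.
Proof.
  intros [H1 H2] [H1' H2']. destruct (lt_eq_lt_dec r r') as [[H|H]|H]; auto.
  - specialize (H2' r H). congruence. - specialize (H2 r' H). congruence.
Qed.

Definition Good e (Z W : cantor) H := exists c f, Rep c e /\ (forall x, eval c [x] (f x)) /\
  (forall x x', f x = f x' -> x = x') /\ (forall y, exists x, f x = y) /\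
  (forall n, H <= n -> Z n = W (f n)) /\ cntb H Z = cntb H (fun i => W (f i)).

Definition Gp (Z W : cantor) := (exists i, Z i <> W i) /\ exists rz rw, isrun Z rz /\ isrun W rw /\ 3 <= rz + rw /\
  exists e, e <= 2 * (rz + rw) /\ Good e Z W (2 * (rz + rw)).

Definition Gr (Z W : cantor) := Gp Z W \/ Gp W Z.

Lemma bmin_prop n p : bmin n p <= n /\ (forall j, j < bmin n p -> p j = false) /\ (bmin n p < n -> p (bmin n p) = true).
Proof.
  induction n; simpl. split; [lia|split; intros; lia].
  destruct IHn as [H1 [H2 H3]].
  destruct (Nat.ltb_spec (bmin n p) n).
  - split; [lia|split; auto].
  - assert (bmin n p = n) as E by lia. rewrite E in *.
    destruct (p n) eqn:Hp; split; try lia; split; auto.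
    intros j Hj. destruct (Nat.eq_dec j n). subst; auto. apply H2; lia.
    intros; lia.
Qed.

Lemma half_oddb n : n = 2 * half n + b2n (oddb n).
Proof.
  destruct (Nat.Even_or_Odd n) as [[p Hp]|[p Hp]]; subst.
  - replace (2 * p) with (2 * p + b2n false) by (simpl; lia). rewrite half_spec, oddb_spec. reflexivity.
  - replace (2 * p + 1) with (2 * p + b2n true) by (simpl; lia). rewrite half_spec, oddb_spec. reflexivity.
Qed.

Lemma cntb_ext n p q : (forall i, i < n -> p i = q i) -> cntb n p = cntb n q.
Proof. induction n; intros H; simpl; auto. rewrite IHn, H; auto. Qed.

Ltac bsplit2 := repeat match goal with
  | H : (_ && _) = true |- _ => apply andb_prop in H; destruct H
  | H : (_ =? _) = true |- _ => apply Nat.eqb_eq in H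
  | H : (_ <? _) = true |- _ => apply Nat.ltb_lt in H
  | H : (_ <=? _) = true |- _ => apply Nat.leb_le in H
  | H : ball _ _ = true |- _ => rewrite ball_spec in H
  end.

Definition chk_facts a b e n m H :=
  n < m /\ H <= m /\ (forall x, x <= n -> exists y, y < m /\ der e x y m = true) /\
  (forall x x' y y', x <= n -> x' <= n -> y < m -> y' < m -> der e x y m = true -> der e x' y' m = true -> x <> x' -> y <> y') /\
  (forall y, y <= n -> exists x, x < m /\ der e x y m = true) /\
  (forall x y, x <= n -> H <= x -> y < m -> der e x y m = true -> bitc a x = bitc b y) /\
  (forall x, x < H -> exists y, y < m /\ der e x y m = true) /\
  cntb H (fun i => bitc a i) = cntb H (fun i => bex m (fun y => der e i y m && bitc b y)).

Lemma chk_iff a b e n m H : chk a b e n m H = true <-> chk_facts a b e n m H.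
Proof.
  unfold chk, chk_facts. split.
  - intros Hc. bsplit2.
    refine (conj H0 (conj H7 (conj _ (conj _ (conj _ (conj _ (conj _ H1))))))).
    + intros x Hx. apply bex_spec. apply H6. lia.
    + intros x x' y y' Hx Hx' Hy Hy' D1 D2 Hne E. subst y'.
      specialize (H5 x ltac:(lia)). rewrite ball_spec in H5. specialize (H5 x' ltac:(lia)).
      rewrite ball_spec in H5. specialize (H5 y Hy). rewrite ball_spec in H5. specialize (H5 y Hy).
      rewrite D1, D2, Nat.eqb_refl in H5.
      apply Nat.eqb_neq in Hne. rewrite Hne in H5. discriminate.
    + intros y Hy. apply bex_spec. apply H4. lia.
    + intros x y Hx HH Hy D. specialize (H3 x ltac:(lia)). apply orb_prop in H3 as [H3|H3].
      apply Nat.ltb_lt in H3; lia. rewrite ball_spec in H3. specialize (H3 y Hy). rewrite D in H3.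
      simpl in H3. apply eqb_prop in H3. auto.
    + intros x Hx. apply bex_spec. auto.
  - intros [H1 [H2 [H3 [H4 [H5 [H6 [H7 H8]]]]]]].
    apply andb_true_intro; split; [|apply Nat.eqb_eq; auto].
    apply andb_true_intro; split; [|apply ball_spec; intros x Hx; apply bex_spec; apply H7; auto].
    apply andb_true_intro; split.
    2:{ apply ball_spec; intros x Hx. destruct (Nat.ltb_spec x H); simpl; auto. apply ball_spec. intros y Hy.
      destruct (der e x y m) eqn:D; simpl; auto. rewrite (H6 x y); auto. apply eqb_reflx. lia. }
    apply andb_true_intro; split; [|apply ball_spec; intros y Hy; apply bex_spec; apply H5; lia].
    apply andb_true_intro; split.
    2:{ apply ball_spec; intros x Hx. apply ball_spec; intros x' Hx'. apply ball_spec; intros y Hy. apply ball_spec; intros y' Hy'.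
      destruct (der e x y m) eqn:D1; destruct (der e x' y' m) eqn:D2; simpl; auto.
      destruct (Nat.eqb_spec x x'); simpl; auto. apply negb_true_iff, Nat.eqb_neq. apply (H4 x x' y y'); auto; lia. }
    apply andb_true_intro; split; [|apply ball_spec; intros x Hx; apply bex_spec; apply H3; lia].
    apply andb_true_intro; split; [apply Nat.ltb_lt; auto|apply Nat.leb_le; auto].
Qed.

Lemma der_det e x y y' m m' c : Rep c e -> der e x y m = true -> der e x y' m' = true -> y = y'.
Proof. intros HR D1 D2. eapply eval_det; eapply der_sound; eauto. Qed.

Lemma chk_good Z W e H :
  (forall n, exists m, chk (prefix_code Z m) (prefix_code W m) e n m H = true) -> Good e Z W H.
Proof.
  intros HC. destruct (Rep_ex e) as [c Hc].
  assert (Ht : forall x, exists y, eval c [x] y).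
  { intros x. destruct (HC x) as [m Hm]. apply chk_iff in Hm. destruct Hm as [_ [_ [Ha _]]].
    destruct (Ha x (le_n _)) as [y [_ D]]. exists y. eapply der_sound; eauto. }
  set (f := fun x => proj1_sig (constructive_indefinite_description _ (Ht x))).
  assert (Hf : forall x, eval c [x] (f x)) by (intros x; exact (proj2_sig (constructive_indefinite_description _ (Ht x)))).
  assert (Hdf : forall x y m, der e x y m = true -> y = f x).
  { intros x y m D. eapply eval_det. eapply der_sound; eauto. auto. }
  exists c, f. split; auto. split; auto. split; [|split; [|split]].
  - intros x x' E. destruct (Nat.eq_dec x x'); auto. exfalso.
    destruct (HC (x + x')) as [m Hm]. apply chk_iff in Hm. destruct Hm as [_ [_ [Ha [Hb _]]]].
    destruct (Ha x ltac:(lia)) as [y [Hy D1]]. destruct (Ha x' ltac:(lia)) as [y' [Hy' D2]].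
    pose proof (Hdf _ _ _ D1). pose proof (Hdf _ _ _ D2). subst.
    apply (Hb x x' (f x) (f x')); auto; lia.
  - intros y. destruct (HC y) as [m Hm]. apply chk_iff in Hm. destruct Hm as [_ [_ [_ [_ [Hc' _]]]]].
    destruct (Hc' y (le_n _)) as [x [_ D]]. exists x. symmetry. eapply Hdf; eauto.
  - intros n Hn. destruct (HC n) as [m Hm]. apply chk_iff in Hm. destruct Hm as [Hnm [_ [Ha [_ [_ [Hd _]]]]]].
    destruct (Ha n (le_n _)) as [y [Hy D]]. pose proof (Hdf _ _ _ D). subst y.
    rewrite <- (bitc_prefix Z m n), <- (bitc_prefix W m (f n)) by auto. apply (Hd n); auto.
  - destruct (HC 0) as [m Hm]. apply chk_iff in Hm. destruct Hm as [_ [HHm [_ [_ [_ [_ [He Hcnt]]]]]]].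
    rewrite (cntb_ext H Z (fun i => bitc (prefix_code Z m) i)) by (intros; rewrite bitc_prefix; auto; lia).
    rewrite Hcnt. apply cntb_ext. intros i Hi. destruct (He i Hi) as [y [Hy D]].
    pose proof (Hdf _ _ _ D). subst y.
    destruct (W (f i)) eqn:EW.
    + apply bex_spec. exists (f i). split; auto. rewrite D, bitc_prefix; auto.
    + apply not_true_iff_false. intros B. apply bex_spec in B as [y [Hy' B]]. apply andb_prop in B as [D' B].
      pose proof (Hdf _ _ _ D'). subst y. rewrite bitc_prefix in B; auto. congruence.
Qed.

Lemma collect_bound (P : nat -> nat -> Prop) N : (forall x, x < N -> exists m, P x m) ->
  (forall x m m', m <= m' -> P x m -> P x m') -> exists M, forall x m, x < N -> M <= m -> P x m.
Proof.
  intros H Hm. induction N. exists 0; intros; lia.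
  destruct IHN as [M HM]. intros; apply H; lia.
  destruct (H N) as [M' HM']. lia. exists (M + M'). intros x m Hx Hle.
  destruct (Nat.eq_dec x N). subst. apply (Hm _ M'); auto; lia. apply HM; lia.
Qed.

Lemma good_chk Z W e H : Good e Z W H -> forall n, exists M, forall m, M <= m ->
  chk (prefix_code Z m) (prefix_code W m) e n m H = true.
Proof.
  intros [c [f [Hc [Hf [Hinj [Hsurj [Htail Hcnt]]]]]]] n.
  assert (Hdf : forall x y m, der e x y m = true -> y = f x).
  { intros x y m D. eapply eval_det. eapply der_sound; eauto. auto. }
  destruct (collect_bound (fun x m => der e x (f x) m = true /\ f x < m /\ x < m /\ exists x', x' < m /\ der e x' x m = true) (S (n + H))) as [M HM].
  { intros x _. destruct (der_complete c e x (f x) (Hf x) Hc) as [m1 D1].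
    destruct (Hsurj x) as [x' Ex']. destruct (der_complete c e x' (f x') (Hf x') Hc) as [m2 D2].
    exists (m1 + m2 + f x + x + x' + 1). split. eapply der_mono; [|eauto]; lia. split. lia. split. lia.
    exists x'. split. lia. rewrite <- Ex'. eapply der_mono; [|eauto]; lia. }
  { intros x m m' Hle [D [H1 [H2 [x' [H3 D']]]]]. split. eapply der_mono; eauto.
    split. lia. split. lia. exists x'. split. lia. eapply der_mono; eauto. }
  exists (M + S (n + H)). intros m Hm. apply chk_iff.
  refine (conj _ (conj _ (conj _ (conj _ (conj _ (conj _ (conj _ _))))))).
  - lia.
  - lia.
  - intros x Hx. destruct (HM x m) as [D [Hfx _]]; try lia. exists (f x); auto.
  - intros x x' y y' Hx Hx' Hy Hy' D1 D2 Hne E. apply Hdf in D1. apply Hdf in D2. subst. apply Hne. apply Hinj. auto.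
  - intros y Hy. destruct (HM y m) as [_ [_ [_ [x' [Hx' D]]]]]; try lia. exists x'; auto.
  - intros x y Hx HH Hy D. apply Hdf in D. subst. rewrite !bitc_prefix by lia. rewrite Htail; auto.
  - intros x Hx. destruct (HM x m) as [D [Hfx _]]; try lia. exists (f x); auto.
  - rewrite (cntb_ext H (fun i => bitc (prefix_code Z m) i) Z) by (intros; rewrite bitc_prefix; auto; lia).
    rewrite Hcnt. apply cntb_ext. intros i Hi. destruct (HM i m) as [D [Hfx _]]; try lia.
    destruct (W (f i)) eqn:EW.
    + symmetry. apply bex_spec. exists (f i). split; auto. rewrite D, bitc_prefix; auto.
    + symmetry. apply not_true_iff_false. intros B. apply bex_spec in B as [y [Hy' B]]. apply andb_prop in B as [D' B].
      pose proof (Hdf _ _ _ D'). subst y. rewrite bitc_prefix in B; auto. congruence.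
Qed.

Lemma chk_anti a b e n n' m H : n' <= n -> chk a b e n m H = true -> chk a b e n' m H = true.
Proof.
  intros Hle Hc. apply chk_iff in Hc. apply chk_iff.
  destruct Hc as [H1 [H2 [H3 [H4 [H5 [H6 [H7 H8]]]]]]].
  refine (conj _ (conj H2 (conj _ (conj _ (conj _ (conj _ (conj H7 H8))))))).
  - lia.
  - intros; apply H3; lia.
  - intros x x' y y' ? ? ? ? ? ? ?. apply (H4 x x' y y'); auto; lia.
  - intros; apply H5; lia.
  - intros x y ? ? ? ?. apply (H6 x y); auto; lia.
Qed.

Lemma runb_lt X m : runb (prefix_code X m) m < m -> isrun X (runb (prefix_code X m) m).
Proof.
  unfold runb. generalize (bmin_prop m (fun i => negb (eqb (bitc (prefix_code X m) i) (bitc (prefix_code X m) 0)))).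
  generalize (bmin m (fun i => negb (eqb (bitc (prefix_code X m) i) (bitc (prefix_code X m) 0)))).
  intros r [H1 [H2 H3]] Hlt. specialize (H3 Hlt).
  rewrite !bitc_prefix in H3 by lia. split.
  - intros E. rewrite E, eqb_reflx in H3. discriminate.
  - intros i Hi. specialize (H2 i Hi). rewrite !bitc_prefix in H2 by lia.
    apply negb_false_iff, eqb_prop in H2. auto.
Qed.

Lemma runb_eq X m r : isrun X r -> r < m -> runb (prefix_code X m) m = r.
Proof.
  intros [H1 H2] Hr. unfold runb. apply bmin_spec; auto.
  - rewrite !bitc_prefix by lia. destruct (X r), (X 0); simpl; auto.
  - intros j Hj. rewrite !bitc_prefix by lia. rewrite H2 by auto. rewrite eqb_reflx. auto.
Qed.

Definition chkl (X Y : cantor) l n m H : bool :=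
  if oddb l then chk (prefix_code Y m) (prefix_code X m) (half l) n m H
  else chk (prefix_code X m) (prefix_code Y m) (half l) n m H.

Lemma Pb_iff X Y n m : Pb n (prefix_code X m) (prefix_code Y m) = true <->
  (exists i, i < m /\ X i <> Y i) /\ exists rz rw, isrun X rz /\ isrun Y rw /\ rz < m /\ rw < m /\ 3 <= rz + rw /\
  exists l, l <= 2 * (2 * (rz + rw)) + 1 /\ forall n', n' <= n -> chkl X Y l n' m (2 * (rz + rw)) = true.
Proof.
  unfold Pb. rewrite !lg_prefix. split.
  - intros HP. bsplit2. split.
    + apply bex_spec in H as [i [Hi E]]. exists i. split; auto. rewrite !bitc_prefix in E by lia.
      intros E'. rewrite E', eqb_reflx in E. discriminate.
    + exists (runb (prefix_code X m) m), (runb (prefix_code Y m) m).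
      split. apply runb_lt; auto. split. apply runb_lt; auto. split; auto. split; auto. split; auto.
      apply bex_spec in H0 as [l [Hl Hc]]. exists l. split. lia. rewrite ball_spec in Hc.
      intros n' Hn'. apply Hc. lia.
  - intros [[i [Hi E]] [rz [rw [Hz [Hw [Hzm [Hwm [H3 [l [Hl Hc]]]]]]]]]].
    rewrite (runb_eq X m rz), (runb_eq Y m rw) by auto.
    repeat (apply andb_true_intro; split).
    + apply bex_spec. exists i. split; auto. rewrite !bitc_prefix by lia. destruct (X i), (Y i); simpl; auto.
    + apply Nat.ltb_lt; auto.
    + apply Nat.ltb_lt; auto.
    + apply Nat.leb_le; auto.
    + apply bex_spec. exists l. split. lia. apply ball_spec. intros n' Hn'. apply Hc. lia.
Qed.

Lemma pigeon (R : nat -> nat -> Prop) B : (forall n, exists l, l < B /\ R l n) ->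
  (forall l n n', n' <= n -> R l n -> R l n') -> exists l, l < B /\ forall n, R l n.
Proof.
  revert R. induction B; intros R H Ha.
  - destruct (H 0) as [l [Hl _]]. lia.
  - destruct (classic (forall n, R B n)) as [HB|HB].
    + exists B. split; auto.
    + apply not_all_ex_not in HB as [n0 Hn0].
      destruct (IHB (fun l n => R l (n + n0))) as [l [Hl Hr]].
      * intros n. destruct (H (n + n0)) as [l [Hl Hr]]. exists l. split; auto.
        destruct (Nat.eq_dec l B). subst. exfalso. apply Hn0. eapply Ha; [|eauto]. lia. lia.
      * intros l n n' Hle Hr. eapply Ha; [|eauto]. lia.
      * exists l. split. lia. intros n. eapply Ha; [|apply (Hr n)]. lia.
Qed.

Lemma half_double e : half (2 * e) = e /\ oddb (2 * e) = false.
Proof. replace (2 * e) with (2 * e + b2n false) by (simpl; lia). rewrite half_spec, oddb_spec. auto. Qed.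
Lemma half_double1 e : half (2 * e + 1) = e /\ oddb (2 * e + 1) = true.
Proof. replace (2 * e + 1) with (2 * e + b2n true) by (simpl; lia). rewrite half_spec, oddb_spec. auto. Qed.

Theorem Gr_pi02 X Y : Gr X Y <-> forall n, exists m, Pb n (prefix_code X m) (prefix_code Y m) = true.
Proof.
  split.
  - intros [[[i0 Hi0] [rz [rw [Hz [Hw [H3 [e [He Hg]]]]]]]] | [[i0 Hi0] [rz [rw [Hz [Hw [H3 [e [He Hg]]]]]]]]]; intros n.
    + destruct (good_chk _ _ _ _ Hg n) as [M HM]. exists (M + i0 + rz + rw + 1).
      apply Pb_iff. split. exists i0. split; auto. lia.
      exists rz, rw. do 5 (split; auto; try lia). exists (2 * e). split. lia.
      intros n' Hn'. unfold chkl. destruct (half_double e) as [E1 E2]. rewrite E1, E2.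
      eapply chk_anti; eauto. apply HM. lia.
    + rewrite Nat.add_comm in He, Hg. destruct (good_chk _ _ _ _ Hg n) as [M HM]. exists (M + i0 + rz + rw + 1).
      apply Pb_iff. split. exists i0. split; auto. lia.
      exists rw, rz. do 5 (split; auto; try lia). exists (2 * e + 1). split. lia.
      intros n' Hn'. unfold chkl. destruct (half_double1 e) as [E1 E2]. rewrite E1, E2.
      eapply chk_anti; eauto. apply HM. lia.
  - intros HP. destruct (HP 0) as [m0 Hm0]. apply Pb_iff in Hm0.
    destruct Hm0 as [[i0 [_ Hi0]] [rz [rw [Hz [Hw [_ [_ [H3 _]]]]]]]].
    destruct (pigeon (fun l n => exists m, forall n', n' <= n -> chkl X Y l n' m (2 * (rz + rw)) = true) (S (2 * (2 * (rz + rw)) + 1))) as [l [Hl Hr]].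
    + intros n. destruct (HP n) as [m Hm]. apply Pb_iff in Hm.
      destruct Hm as [_ [rz' [rw' [Hz' [Hw' [_ [_ [_ [l [Hl Hc]]]]]]]]]].
      rewrite (isrun_uniq _ _ _ Hz' Hz), (isrun_uniq _ _ _ Hw' Hw) in *.
      exists l. split. lia. exists m. auto.
    + intros l n n' Hle [m Hm]. exists m. intros; apply Hm; lia.
    + pose proof (half_oddb l) as Hhl. destruct (oddb l) eqn:Eo.
      * right. split. exists i0; auto. exists rw, rz. do 3 (split; auto; try lia).
        exists (half l). simpl in Hhl. split. lia. rewrite Nat.add_comm. apply chk_good.
        intros n. destruct (Hr n) as [m Hm]. exists m. specialize (Hm n (le_n _)). unfold chkl in Hm. rewrite Eo in Hm. auto.
      * left. split. exists i0; auto. exists rz, rw. do 3 (split; auto; try lia).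
        exists (half l). simpl in Hhl. split. lia. apply chk_good.
        intros n. destruct (Hr n) as [m Hm]. exists m. specialize (Hm n (le_n _)). unfold chkl in Hm. rewrite Eo in Hm. auto.
Qed.

Lemma computable_iff f : computable f <-> comput 1 (fun v => f (nth 0 v 0)).
Proof.
  split.
  - intros [c Hc]. exists c. intros [|x [|y xs]] Hl; simpl in Hl; try discriminate. apply Hc.
  - intros [c Hc]. exists c. intros n. apply (Hc [n]). reflexivity.
Qed.

Lemma comp_computable f h : computable f -> computable h -> computable (fun n => h (f n)).
Proof.
  rewrite !computable_iff. intros Hf Hh. apply (lift1 h); auto.
Qed.

Lemma inv_computable f g : computable f -> (forall n, g (f n) = n) -> (forall n, f (g n) = n) -> computable g.
Proof.
  rewrite computable_iff. intros Hf Hgf Hfg.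
  assert (Hd : comput 2 (fun v => b2n (negb (f (nth 0 v 0) =? nth 1 v 0)))).
  { apply c_negb. apply c_eqb. apply (lift1 f); auto. apply c_proj. apply c_proj. }
  destruct Hd as [d Hd]. exists (PMin d). intros m. constructor.
  - assert (E : 0 = b2n (negb (f (nth 0 [g m; m] 0) =? nth 1 [g m; m] 0))).
    { simpl. rewrite Hfg, Nat.eqb_refl. reflexivity. }
    rewrite E. apply Hd. reflexivity.
  - intros z Hz. exists (b2n (negb (f (nth 0 [z; m] 0) =? nth 1 [z; m] 0))). split.
    + simpl. destruct (Nat.eqb_spec (f z) m). subst m. rewrite Hgf in Hz. lia. simpl. lia.
    + apply Hd. reflexivity.
Qed.

Lemma one_equiv_refl A : one_equiv A A.
Proof.
  exists (fun n => n). split. exists (PProj 0). intros n. constructor.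
  split. exists (fun n => n). auto. auto.
Qed.

Lemma one_equiv_sym A B : one_equiv A B -> one_equiv B A.
Proof.
  intros [f [Hf [[g [Hgf Hfg]] H]]]. exists g. split. eapply inv_computable; eauto.
  split. exists f. auto. intros m. rewrite <- (Hfg m) at 1. rewrite <- H. auto.
Qed.

Lemma one_equiv_trans A B C : one_equiv A B -> one_equiv B C -> one_equiv A C.
Proof.
  intros [f [Hf [[g [Hgf Hfg]] H]]] [h [Hh [[k [Hkh Hhk]] H']]].
  exists (fun n => h (f n)). split. apply comp_computable; auto.
  split. exists (fun n => g (k n)). split; intros n. rewrite Hkh; auto. rewrite Hfg; auto.
  intros n. rewrite H, H'. auto.
Qed.

Lemma fin_computable p H : (forall n, H <= n -> p n = n) -> computable p.
Proof.
  intros Hp. apply computable_iff.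
  eapply comput_ext; [|apply (c_if 1 (fun v => nth 0 v 0 <? H) (fun v => nthc (nth 0 v 0) (enc (map p (seq 0 H)))) (fun v => nth 0 v 0))].
  - intros xs _. cbv beta. set (n := nth 0 xs 0). destruct (Nat.ltb_spec n H).
    + rewrite nthc_enc. rewrite nth_indep with (d' := p 0) by (rewrite length_map, length_seq; auto).
      rewrite map_nth, seq_nth; auto.
    + symmetry; apply Hp; auto.
  - cpt.
  - cpt.
  - cpt.
Qed.

Lemma cntb_le n p : cntb n p <= n.
Proof. induction n; simpl; auto. destruct (p n); simpl; lia. Qed.
Lemma cntb_pos n p j : j < n -> p j = true -> 0 < cntb n p.
Proof. induction n; intros Hj Hp; simpl. lia. destruct (Nat.eq_dec j n). subst. rewrite Hp. simpl; lia.
  pose proof (IHn ltac:(lia) Hp). lia. Qed.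
Lemma cntb_lt n p j : j < n -> p j = false -> cntb n p < n.
Proof. induction n; intros Hj Hp; simpl. lia. destruct (Nat.eq_dec j n). subst. rewrite Hp. simpl.
  pose proof (cntb_le n p); lia. pose proof (IHn ltac:(lia) Hp). destruct (p n); simpl; lia. Qed.

Lemma cnt_upd n j b w : j < n -> cntb n (fun i => if i =? j then b else w i) + b2n (w j) = cntb n w + b2n b.
Proof.
  induction n; intros Hj. lia. simpl. destruct (Nat.eq_dec j n).
  - subst. rewrite Nat.eqb_refl. rewrite (cntb_ext n _ w). lia.
    intros i Hi. destruct (Nat.eqb_spec i n); auto; lia.
  - destruct (Nat.eqb_spec n j). lia. pose proof (IHn ltac:(lia)). lia.
Qed.

Definition swp j H n := if n =? j then H else if n =? H then j else n.
Lemma swp_inv j H n : j <> H -> swp j H (swp j H n) = n.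
Proof. intros Hne. unfold swp. destruct (Nat.eqb_spec n j); destruct (Nat.eqb_spec n H); subst;
  repeat (first [rewrite Nat.eqb_refl | match goal with |- context [?a =? ?b] => destruct (Nat.eqb_spec a b) end]); auto; lia. Qed.

Lemma perm_exists H (u v : nat -> bool) : cntb H u = cntb H v ->
  exists p q, (forall n, q (p n) = n) /\ (forall n, p (q n) = n) /\ (forall n, H <= n -> p n = n) /\
    (forall i, i < H -> u i = v (p i)).
Proof.
  revert v. induction H as [|H IHn]; intros v Hc.
  - exists (fun n => n), (fun n => n). repeat split; auto. intros; lia.
  - simpl in Hc. destruct (bool_dec (u H) (v H)) as [E|E].
    + destruct (IHn v) as [p [q [H1 [H2 [H3 H4]]]]]. rewrite E in Hc. lia.
      exists p, q. repeat split; auto. intros; apply H3; lia.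
      intros i Hi. destruct (Nat.eq_dec i H). subst. rewrite H3; auto. apply H4; lia.
    + assert (Hj : exists j, j < H /\ v j = u H).
      { destruct (u H) eqn:Eu; destruct (v H) eqn:Ev; try congruence; simpl in Hc.
        - destruct (classic (exists j, j < H /\ v j = true)) as [?|Hn]; auto. exfalso.
          assert (cntb H v = 0). { clear -Hn. induction H as [|H IHn]; simpl; auto. destruct (v H) eqn:E'. exfalso; apply Hn; exists H; auto.
            simpl. rewrite IHn. auto. intros [j [Hj Hv]]. apply Hn. exists j. split; auto. }
          lia.
        - destruct (classic (exists j, j < H /\ v j = false)) as [?|Hn]; auto. exfalso.
          assert (cntb H v = H). { clear -Hn. induction H as [|H IHn]; simpl; auto. destruct (v H) eqn:E'. simpl. rewrite IHn. lia.
            intros [j [Hj Hv]]. apply Hn. exists j. split; auto. exfalso; apply Hn; exists H; auto. }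
          pose proof (cntb_le H u). lia. }
      destruct Hj as [j [Hj Hvj]].
      set (v' := fun n => v (swp j H n)).
      assert (Hc' : cntb H u = cntb H v').
      { pose proof (cnt_upd H j (v H) v Hj).
        rewrite (cntb_ext H v' (fun i => if i =? j then v H else v i)) by
          (intros i Hi; unfold v', swp; destruct (Nat.eqb_spec i j); auto; destruct (Nat.eqb_spec i H); auto; lia).
        rewrite Hvj in H0. lia. }
      destruct (IHn v' Hc') as [p [q [H1 [H2 [H3 H4]]]]].
      exists (fun n => swp j H (p n)), (fun n => q (swp j H n)). repeat split.
      * intros n. rewrite swp_inv by lia. auto.
      * intros n. rewrite H2. apply swp_inv. lia.
      * intros n Hn. rewrite H3 by lia. unfold swp. destruct (Nat.eqb_spec n j); try lia. destruct (Nat.eqb_spec n H); try lia.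
      * intros i Hi. destruct (Nat.eq_dec i H).
        -- subst i. rewrite H3 by lia. unfold swp. rewrite Nat.eqb_refl. destruct (Nat.eqb_spec H j); try lia. auto.
        -- rewrite H4 by lia. auto.
Qed.

Lemma Gp_equiv Z W : Gp Z W -> one_equiv Z W.
Proof.
  intros [_ [rz [rw [_ [_ [_ [e [_ [c [f [Hc [Hf [Hinj [Hsurj [Htail Hcnt]]]]]]]]]]]]]]].
  set (H := 2 * (rz + rw)) in *.
  destruct (perm_exists H Z (fun i => W (f i)) Hcnt) as [p [q [H1 [H2 [H3 H4]]]]].
  assert (Hfi : forall y, {x | f x = y}) by (intros; apply constructive_indefinite_description; auto).
  set (fi := fun y => proj1_sig (Hfi y)).
  assert (Hfi1 : forall y, f (fi y) = y) by (intros; exact (proj2_sig (Hfi y))).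
  assert (Hfi2 : forall x, fi (f x) = x) by (intros; apply Hinj; auto).
  exists (fun n => f (p n)). split.
  - apply comp_computable. eapply fin_computable; eauto. exists c; auto.
  - split. exists (fun m => q (fi m)). split; intros n. rewrite Hfi2; auto. rewrite H2; auto.
    intros n. destruct (Nat.lt_ge_cases n H). auto. rewrite H3; auto.
Qed.

Lemma Gr_equiv Z W : Gr Z W -> one_equiv Z W.
Proof. intros [H|H]. apply Gp_equiv; auto. apply one_equiv_sym, Gp_equiv; auto. Qed.

Lemma run_exists X : (exists i, X i <> X 0) -> exists r, isrun X r.
Proof.
  intros [i0 Hi0].
  generalize (bmin_prop (S i0) (fun i => negb (eqb (X i) (X 0)))).
  generalize (bmin (S i0) (fun i => negb (eqb (X i) (X 0)))). intros r [H1 [H2 H3]].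
  assert (r < S i0).
  { destruct (Nat.eq_dec r (S i0)); try lia. exfalso. specialize (H2 i0). subst r.
    specialize (H2 ltac:(lia)). destruct (X i0), (X 0); simpl in *; congruence. }
  exists r. split.
  - specialize (H3 H). intros E. rewrite E, eqb_reflx in H3. discriminate.
  - intros i Hi. specialize (H2 i Hi). apply negb_false_iff, eqb_prop in H2. auto.
Qed.

Lemma cnt_block N k b : k <= N -> cntb N (fun i => if i <? k then b else negb b) = if b then k else N - k.
Proof.
  induction N; intros Hk; simpl. destruct b; lia.
  destruct (Nat.eq_dec k (S N)).
  - subst k. rewrite (cntb_ext N _ (fun _ => b)). 2:{ intros i Hi. destruct (Nat.ltb_spec i (S N)); auto; lia. }
    destruct (Nat.ltb_spec N (S N)); try lia.
    assert (forall n, cntb n (fun _ => b) = if b then n else 0). { intros n; induction n as [|n IHn]; simpl. destruct b; auto. rewrite IHn. destruct b; simpl; lia. }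
    rewrite H0. destruct b; simpl; lia.
  - rewrite IHN by lia. destruct (Nat.ltb_spec N k); try lia. destruct b; simpl; [lia|destruct k; lia].
Qed.



Lemma cnt_tail N H u v : N <= H -> cntb N u = cntb N v -> (forall i, N <= i -> i < H -> u i = v i) -> cntb H u = cntb H v.
Proof.
  induction H as [|H IH]; intros HN Hc Hi. assert (N = 0) by lia. subst. auto.
  destruct (Nat.eq_dec N (S H)). subst; auto. simpl.
  assert (E : cntb H u = cntb H v). { apply IH; auto; try lia. }
  rewrite E, (Hi H); auto; lia.
Qed.

Lemma diam2 X Y : one_equiv X Y -> X = Y \/ Gr X Y \/ exists Z, Gr X Z /\ Gr Z Y.
Proof.
  intros HE. destruct (classic (forall i, X i = Y i)) as [Heq|Hne].
  { left. apply functional_extensionality. auto. }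
  right. apply not_all_ex_not in Hne as [i0 Hi0].
  destruct HE as [f [[c Hc] [[g [Hgf Hfg]] Hxy]]].
  assert (HnX : exists i, X i <> X 0).
  { apply NNPP. intros Hn. apply Hi0. assert (Hc0 : forall i, X i = X 0) by (intros i; apply NNPP; intros E; apply Hn; exists i; auto).
    assert (E : Y i0 = X (g i0)) by (rewrite Hxy, Hfg; auto). rewrite E, Hc0, (Hc0 (g i0)). auto. }
  assert (HnY : exists i, Y i <> Y 0).
  { apply NNPP. intros Hn. apply Hi0. assert (Hc0 : forall i, Y i = Y 0) by (intros i; apply NNPP; intros E; apply Hn; exists i; auto).
    rewrite Hxy, Hc0, (Hc0 i0). auto. }
  destruct (run_exists X HnX) as [rX HrX]. destruct (run_exists Y HnY) as [rY HrY].
  set (e := encp c). set (eid := encp (PProj 0)). set (K := e + eid + 3). set (N := 2 * K + rX + 1).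
  set (cX := cntb N X). set (b := N <=? 2 * cX). set (cb := if b then cX else N - cX).
  assert (Hboth : (exists j, j < N /\ X j = true) /\ (exists j, j < N /\ X j = false)).
  { destruct HrX as [Hr _]. destruct (X 0) eqn:E0.
    - split. exists 0. split; auto. unfold N; lia. exists rX. split. unfold N; lia. destruct (X rX); congruence.
    - split. exists rX. split. unfold N; lia. destruct (X rX); congruence. exists 0. split; auto. unfold N; lia. }
  destruct Hboth as [[j1 [Hj1 E1]] [j2 [Hj2 E2]]].
  pose proof (cntb_pos N X j1 Hj1 E1) as Hpos. pose proof (cntb_lt N X j2 Hj2 E2) as Hlt.
  fold cX in Hpos, Hlt.
  assert (Hcb : N <= 2 * cb /\ cb < N).
  { unfold cb, b. destruct (Nat.leb_spec N (2 * cX)); lia. }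
  assert (HKcb : K <= cb) by (unfold N in Hcb; lia).
  set (Z := fun i => if i <? N then (if i <? cb then b else negb b) else X i).
  assert (HrZ : isrun Z cb).
  { unfold Z. split.
    - destruct (Nat.ltb_spec cb N); try lia. destruct (Nat.ltb_spec 0 N); try lia.
      destruct (Nat.ltb_spec cb cb); try lia. destruct (Nat.ltb_spec 0 cb); try lia. destruct b; discriminate.
    - intros i Hi. destruct (Nat.ltb_spec i N); try lia. destruct (Nat.ltb_spec 0 N); try lia.
      destruct (Nat.ltb_spec i cb); try lia. destruct (Nat.ltb_spec 0 cb); try lia. auto. }
  assert (HcntN : cntb N Z = cntb N X).
  { rewrite (cntb_ext N Z (fun i => if i <? cb then b else negb b)).
    2:{ intros i Hi. unfold Z. destruct (Nat.ltb_spec i N); auto; lia. }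
    rewrite cnt_block by lia. fold cX. unfold cb. destruct b; lia. }
  assert (HcntH : forall H, N <= H -> cntb H Z = cntb H X).
  { intros H HH. apply (cnt_tail N); auto. intros i Hi _. unfold Z. destruct (Nat.ltb_spec i N); auto; lia. }
  assert (Hzx : forall n, N <= n -> Z n = X n).
  { intros n Hn. unfold Z. destruct (Nat.ltb_spec n N); auto; lia. }
  assert (G1 : (exists i, Z i <> X i) -> Gp Z X).
  { intros Hd. split; auto. exists cb, rX. split; auto. split; auto. split. unfold K in HKcb. lia.
    exists eid. split. unfold K in HKcb. lia. exists (PProj 0), (fun n => n). split. apply Rep_enc.
    split. intros x. constructor. split. auto. split. intros y; exists y; auto.
    split. intros n Hn. apply Hzx. lia. apply HcntH. lia. }
  assert (G2 : (exists i, Z i <> Y i) -> Gp Z Y).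
  { intros Hd. split; auto. exists cb, rY. split; auto. split; auto. split. unfold K in HKcb. lia.
    exists e. split. unfold K in HKcb. lia. exists c, f. split. apply Rep_enc.
    split. auto. split. intros x x' E. rewrite <- (Hgf x), <- (Hgf x'), E. auto.
    split. intros y; exists (g y); auto.
    split. intros n Hn. rewrite Hzx by lia. auto.
    rewrite HcntH by lia. apply cntb_ext. intros; auto. }
  destruct (classic (forall i, Z i = X i)) as [HZX|HZX].
  - left. assert (EZ : Z = X) by (apply functional_extensionality; auto).
    left. rewrite <- EZ. apply G2. exists i0. rewrite HZX. auto.
  - apply not_all_ex_not in HZX as [i1 Hi1].
    destruct (classic (forall i, Z i = Y i)) as [HZY|HZY].
    + left. assert (EZ : Z = Y) by (apply functional_extensionality; auto).
      right. rewrite <- EZ. apply G1. exists i1; auto.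
    + apply not_all_ex_not in HZY as [i2 Hi2].
      right. exists Z. split. right. apply G1. exists i1; auto. left. apply G2. exists i2; auto.
Qed.

Lemma path_conn (G : cantor -> cantor -> Prop) k x y : path_le G k x y -> connected G x y.
Proof.
  revert y. induction k; simpl; intros y H.
  - subst. apply rt_refl.
  - destruct H as [H|[z [H1 H2]]]. auto. eapply rt_trans. apply IHk; eauto. apply rt_step; auto.
Qed.

Definition X0 : cantor := fun n => negb (oddb n).
Definition Y0 : cantor := fun n => oddb n.
Definition sw (n : nat) : nat := if oddb n then pred n else S n.

Lemma sw_spec n : (oddb n = true -> oddb (sw n) = false) /\ (oddb n = false -> oddb (sw n) = true) /\ sw (sw n) = n.
Proof.
  destruct (Nat.Even_or_Odd n) as [[p ->]|[p ->]]; unfold sw.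
  - rewrite (proj2 (half_double p)). replace (S (2 * p)) with (2 * p + 1) by lia.
    rewrite (proj2 (half_double1 p)). replace (pred (2 * p + 1)) with (2 * p) by lia.
    split; [discriminate|]. split; auto.
  - rewrite (proj2 (half_double1 p)). replace (pred (2 * p + 1)) with (2 * p) by lia.
    rewrite (proj2 (half_double p)). split; auto. split; [discriminate|]. cbn iota. lia.

Qed.

Lemma X0Y0_equiv : one_equiv X0 Y0.
Proof.
  exists sw. split.
  - apply computable_iff. unfold sw. cpt.
  - split. exists sw. split; intros n; apply sw_spec.
    intros n. unfold X0, Y0. destruct (sw_spec n) as [A [B _]]. destruct (oddb n); simpl.
    rewrite A; auto. rewrite B; auto.
Qed.

Lemma oddb0 : oddb 0 = false.
Proof. exact (oddb_spec 0 false). Qed.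
Lemma oddb1 : oddb 1 = true.
Proof. exact (oddb_spec 0 true). Qed.

Lemma X0Y0_not_adj : ~ Gr X0 Y0.
Proof.
  assert (RX : isrun X0 1). { unfold X0. split. rewrite oddb0, oddb1. discriminate. intros i Hi. assert (i = 0) by lia. subst; auto. }
  assert (RY : isrun Y0 1). { unfold Y0. split. rewrite oddb0, oddb1. discriminate. intros i Hi. assert (i = 0) by lia. subst; auto. }
  intros [[_ [rz [rw [Hz [Hw [H3 _]]]]]]|[_ [rz [rw [Hz [Hw [H3 _]]]]]]].
  - rewrite (isrun_uniq _ _ _ Hz RX), (isrun_uniq _ _ _ Hw RY) in H3. lia.
  - rewrite (isrun_uniq _ _ _ Hz RY), (isrun_uniq _ _ _ Hw RX) in H3. lia.
Qed.

Theorem theorem4p1 : Pi02_graphable_diam one_equiv 2.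
Proof.
  exists Gr. split; [|split; [|split]].
  - exists (fun n a b => Pb n a b = true). split.
    + assert (HP : comput 3 (fun v => 1 - b2n (Pb (nth 0 v 0) (nth 1 v 0) (nth 2 v 0)))).
      { apply c_sub. apply c_const. apply c_Pb. }
      destruct HP as [c Hc]. exists c. intros a b d. exists (1 - b2n (Pb a b d)). split.
      apply (Hc [a; b; d]). reflexivity. destruct (Pb a b d); simpl; split; intros; auto; discriminate.
    + intros X Y. apply Gr_pi02.
  - split. intros x y [H|H]; [right|left]; auto.
    intros x [[[i Hi] _]|[[i Hi] _]]; auto.
  - intros X Y. split.
    + induction 1. apply Gr_equiv; auto. apply one_equiv_refl. eapply one_equiv_trans; eauto.
    + intros H. apply (path_conn _ 2). destruct (diam2 X Y H) as [E|[E|[Z [E1 E2]]]].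
      * subst. simpl. auto.
      * simpl. left. right. exists X. auto.
      * simpl. right. exists Z. split; auto. right. exists X. auto.
  - split.
    + intros X Y H. assert (HE : one_equiv X Y).
      { induction H. apply Gr_equiv; auto. apply one_equiv_refl. eapply one_equiv_trans; eauto. }
      destruct (diam2 X Y HE) as [E|[E|[Z [E1 E2]]]].
      * subst. simpl. auto.
      * simpl. left. right. exists X. auto.
      * simpl. right. exists Z. split; auto. right. exists X. auto.
    + intros j Hj. destruct (Nat.le_gt_cases 2 j); auto. exfalso.
      assert (HC : connected Gr X0 Y0).
      { apply (path_conn _ 2). destruct (diam2 X0 Y0 X0Y0_equiv) as [E|[E|[Z [E1 E2]]]].
        * rewrite E. simpl. auto.
        * simpl. left. right. exists X0. auto.
        * simpl. right. exists Z. split; auto. right. exists X0. auto. }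
      specialize (Hj X0 Y0 HC).
      assert (Hne : X0 <> Y0). { intros E. assert (X0 0 = Y0 0) by (rewrite E; auto). unfold X0, Y0 in H0. rewrite oddb0 in H0. discriminate. }
      destruct j as [|[|j]]; try lia; simpl in Hj.
      * auto.
      * destruct Hj as [E|[z [E H1]]]. auto. subst z. apply X0Y0_not_adj; auto.
Qed.
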